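(* Fix $\mu\in(-1,1)$, let $m>0$ and $\kappa>0$ small, let $\xi\in\mathcal A_{\rho_\varepsilon}$ (i.e. $u^\xi\in\mathcal M_\mu$), and let $v$ (sufficiently regular) satisfy $\langle v,u^\xi_i\rangle=0$ for $i=1,\dots,N$, $\|v\|<\varepsilon^{3/2+m}$ and $\|v\|_{L^4}<\varepsilon^{3/4+m/2-\kappa}$. Then for each $i=1,\dots,N$, $$\langle u^\xi_i,\mathcal L(u^\xi+v)\rangle\le C\varepsilon^{2+2m-2\kappa},$$ with $C$ independent of $\varepsilon,\xi,v$.
   Context: $0<\varepsilon\ll1$; $f(u)=u^3-u$; $\langle\cdot,\cdot\rangle$, $\|\cdot\|$ inner product and norm of $L^2(0,1)$. $U(x)=\tanh(x/\sqrt2)$; $U(x;\xi,\pm1)=\pm U((x-\xi)/\varepsilon)$. Fix an integer $N\ge1$, small $\kappa_0>0$, $\rho_\varepsilon=\varepsilon^{\kappa_0}$. $\Omega_{\rho_\varepsilon}=\{h\in\mathbb R^{N+1}:0<h_1<\dots<h_{N+1}<1,\ \min_{j=0,\dots,N+1}|h_{j+1}-h_j|>\varepsilon/\rho_\varepsilon\}$ with $h_0=-h_1$, $h_{N+2}=2-h_{N+1}$. For $h\in\Omega_{\rho_\varepsilon}$, $u^h=\sum_{j=1}^{N+1}U(\cdot;h_j,(-1)^{j+1})+\beta_N$, where $\beta_N=\frac{(-1)^N-1}{2}+\mathcal O(\exp)$ (also for derivatives; exponentially small in $\varepsilon$) makes $u^h(0)=-1$ and $u^h$ satisfy Neumann boundary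 conditions. $\mathcal M=\{u^h:h\in\Omega_{\rho_\varepsilon}\}$, $\mathcal M_\mu=\{u^h\in\mathcal M:\int_0^1u^h=\mu\}$. There is a smooth map $h_{N+1}:[0,1]^N\to\mathbb R$ such that $u^h\in\mathcal M_\mu$ iff $h=(\xi,h_{N+1}(\xi))\in\Omega_{\rho_\varepsilon}$, $\xi=(h_1,\dots,h_N)$; $\mathcal A_{\rho_\varepsilon}=\{(\xi,h_{N+1}(\xi))\in\Omega_{\rho_\varepsilon}:\xi\in[0,1]^N\}$, and for such $\xi$, $u^\xi=u^{(\xi,h_{N+1}(\xi))}$, $u^\xi_i=\partial_{\xi_i}u^\xi$. $\mathcal L(\psi)=\varepsilon^2\psi_{xx}-f(\psi)$. *)

(* Defs.v *)
From Stdlib Require Import Reals Lra Lia Arith.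
From Coquelicot Require Import Coquelicot.
Open Scope R_scope.

Definition tanh (y : R) : R := (exp y - exp (- y)) / (exp y + exp (- y)).

Definition Uprof (y : R) : R := tanh (y / sqrt 2).
Definition Uprof' (y : R) : R := (1 - (Uprof y) ^ 2) / sqrt 2.

(* U(x; xi, s) = s * U((x - xi)/eps),  s = +1 or -1 *)
Definition layer (eps xi s x : R) : R := s * Uprof ((x - xi) / eps).
Definition layer' (eps xi s x : R) : R := s * Uprof' ((x - xi) / eps) / eps.

(* Points h : nat -> R, only h 1, ..., h (N+1) are used.
   Sum of the N+1 alternating layers: sum_{j=1}^{N+1} U(x; h_j, (-1)^(j+1)). *)
Definition Ssum (eps : R) (N : nat) (h : nat -> R) (x : R) : R :=
  sum_n (fun k => layer eps (h (S k)) ((-1) ^ k) x) N.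
Definition Ssum' (eps : R) (N : nat) (h : nat -> R) (x : R) : R :=
  sum_n (fun k => layer' eps (h (S k)) ((-1) ^ k) x) N.

(* Correction beta_N(h, x): the (explicit) smooth correction making
   u^h(0) = -1 and (u^h)'(0) = (u^h)'(1) = 0 (Neumann).  It equals
   ((-1)^N - 1)/2 up to exponentially small terms. *)
Definition betaN (eps : R) (N : nat) (h : nat -> R) (x : R) : R :=
  (- 1 - Ssum eps N h 0) - Ssum' eps N h 0 * x
  + (Ssum' eps N h 0 - Ssum' eps N h 1) / 2 * x ^ 2.

Definition uh (eps : R) (N : nat) (h : nat -> R) (x : R) : R :=
  Ssum eps N h x + betaN eps N h x.

Definition rho (eps kappa0 : R) : R := Rpower eps kappa0.

Definition hext (N : nat) (h : nat -> R) (j : nat) : R :=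
  if Nat.eqb j 0 then - h 1%nat
  else if Nat.eqb j (N + 2) then 2 - h (N + 1)%nat
  else h j.

Definition InOmega (eps kappa0 : R) (N : nat) (h : nat -> R) : Prop :=
  0 < h 1%nat /\
  (forall j : nat, (1 <= j <= N)%nat -> h j < h (S j)) /\
  h (N + 1)%nat < 1 /\
  (forall j : nat, (j <= N + 1)%nat ->
     Rabs (hext N h (S j) - hext N h j) > eps / rho eps kappa0).

Definition hcat (N : nat) (xi : nat -> R) (t : R) : nat -> R :=
  fun j => if Nat.eqb j (N + 1) then t else xi j.

Definition shift (xi : nat -> R) (i : nat) (s : R) : nat -> R :=
  fun j => if Nat.eqb j i then xi j + s else xi j.

Definition mass (eps : R) (N : nat) (h : nat -> R) : R :=
  RInt (uh eps N h) 0 1.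

(* H plays the role of the map h_{N+1} : xi |-> h_{N+1}(xi) near xi:
   it enforces the mass constraint int_0^1 u^(xi', H xi') = mu for all xi'
   near xi in the coordinate directions, and is differentiable at xi
   in each coordinate direction. *)
Definition mass_map (eps : R) (N : nat) (mu : R) (H : (nat -> R) -> R)
  (xi : nat -> R) : Prop :=
  (exists delta : R, 0 < delta /\
     forall i : nat, (1 <= i <= N)%nat ->
     forall s : R, Rabs s < delta ->
       mass eps N (hcat N (shift xi i s) (H (shift xi i s))) = mu) /\
  (forall i : nat, (1 <= i <= N)%nat ->
     ex_derive (fun s => H (shift xi i s)) 0).

Definition uxi (eps : R) (N : nat) (H : (nat -> R) -> R) (xi : nat -> R)
  (x : R) : R := uh eps N (hcat N xi (H xi)) x.

Definition uxi_i (eps : R) (N : nat) (H : (nat -> R) -> R) (xi : nat -> R)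
  (i : nat) (x : R) : R :=
  Derive (fun s => uxi eps N H (shift xi i s) x) 0.

Definition f (u : R) : R := u ^ 3 - u.
Definition Lop (eps : R) (psi : R -> R) (x : R) : R :=
  eps ^ 2 * Derive_n psi 2 x - f (psi x).

Definition ip (g1 g2 : R -> R) : R := RInt (fun x => g1 x * g2 x) 0 1.
Definition L2norm (g : R -> R) : R := sqrt (RInt (fun x => (g x) ^ 2) 0 1).
Definition L4norm (g : R -> R) : R := sqrt (sqrt (RInt (fun x => (g x) ^ 4) 0 1)).

(* "sufficiently regular": C^2 on [0,1] (twice differentiable everywhere,
   continuous second derivative on [0,1]) with Neumann boundary conditions *)
Definition regular_neumann (v : R -> R) : Prop :=
  (forall x, ex_derive v x) /\ (forall x, ex_derive (Derive v) x) /\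
  (forall x, 0 <= x <= 1 -> continuous (Derive_n v 2) x) /\
  Derive v 0 = 0 /\ Derive v 1 = 0.

(* Main.v *)
Require Import Defs.
From Stdlib Require Import Reals Lra Lia FunctionalExtensionality.
From Coquelicot Require Import Coquelicot.
Open Scope R_scope.

Lemma sqrt2_pos : 0 < sqrt 2.
Proof. apply sqrt_lt_R0; lra. Qed.

Lemma is_derive_Uprof y : is_derive Uprof y (Uprof' y).
Proof.
  unfold Uprof', Uprof, Defs.tanh.
  pose proof sqrt2_pos as H2.
  auto_derive.
  - apply Rgt_not_eq. apply Rplus_lt_le_0_compat. apply exp_pos. left; apply exp_pos.
  - unfold Rdiv. set (a := exp (y * / sqrt 2)). set (b := exp (- (y * / sqrt 2))).
    assert (0 < a) by apply exp_pos. assert (0 < b) by apply exp_pos.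
    field. split; lra.
Qed.

Definition P (y : R) : R := 1 - Uprof y ^ 2.
Definition U2 (y : R) : R := - Uprof y * P y.
Definition U3 (y : R) : R := Uprof' y * (3 * Uprof y ^ 2 - 1).

Lemma sqrt2_sq : sqrt 2 * sqrt 2 = 2.
Proof. apply sqrt_sqrt; lra. Qed.

Lemma Uprof_lt1 y : Rabs (Uprof y) < 1.
Proof.
  unfold Uprof, Defs.tanh.
  set (a := exp (y / sqrt 2)). set (b := exp (- (y / sqrt 2))).
  assert (0 < a) by apply exp_pos. assert (0 < b) by apply exp_pos.
  apply Rabs_def1.
  - apply Rmult_lt_reg_r with (a+b). lra. unfold Rdiv. rewrite Rmult_assoc, Rinv_l; lra.
  - apply Rmult_lt_reg_r with (a+b). lra. unfold Rdiv. rewrite Rmult_assoc, Rinv_l; lra.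
Qed.

Lemma Uprof_le1 y : Rabs (Uprof y) <= 1.
Proof. left; apply Uprof_lt1. Qed.

Lemma Uprof_nonneg y : 0 <= y -> 0 <= Uprof y.
Proof.
  intros Hy. unfold Uprof, Defs.tanh. pose proof sqrt2_pos.
  assert (exp (- (y / sqrt 2)) <= exp (y / sqrt 2)).
  { destruct (Req_dec y 0). subst. unfold Rdiv. rewrite Rmult_0_l, Ropp_0. lra.
    left. apply exp_increasing. assert (0 < y / sqrt 2). apply Rdiv_lt_0_compat; lra. lra. }
  apply Rdiv_le_0_compat. lra. apply Rplus_lt_0_compat; apply exp_pos.
Qed.

Lemma Uprof_odd y : Uprof (- y) = - Uprof y.
Proof.
  unfold Uprof, Defs.tanh. pose proof sqrt2_pos.
  replace (- y / sqrt 2) with (- (y / sqrt 2)) by (field; lra).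
  rewrite Ropp_involutive.
  set (a := exp (y / sqrt 2)). set (b := exp (- (y / sqrt 2))).
  assert (0 < a) by apply exp_pos. assert (0 < b) by apply exp_pos.
  field. lra.
Qed.

Lemma Uprof_nonpos y : y <= 0 -> Uprof y <= 0.
Proof.
  intros. replace y with (- - y) by ring. rewrite Uprof_odd.
  assert (0 <= Uprof (- y)) by (apply Uprof_nonneg; lra). lra.
Qed.

Lemma P_pos y : 0 < P y.
Proof.
  unfold P. pose proof (Uprof_lt1 y).
  assert (Uprof y ^ 2 < 1).
  { replace (Uprof y ^ 2) with (Rabs (Uprof y) * Rabs (Uprof y)).
    pose proof (Rabs_pos (Uprof y)). nra.
    rewrite <- Rabs_mult. simpl. rewrite Rmult_1_r. apply Rabs_right.
    apply Rle_ge, Rle_0_sqr. }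
  lra.
Qed.

Lemma P_le1 y : P y <= 1.
Proof. unfold P. pose proof (pow2_ge_0 (Uprof y)). lra. Qed.

Lemma P_decay y : P y <= 4 * exp (- (sqrt 2 * Rabs y)).
Proof.
  unfold P, Uprof, Defs.tanh. pose proof sqrt2_pos.
  set (a := exp (y / sqrt 2)). set (b := exp (- (y / sqrt 2))).
  assert (0 < a) by apply exp_pos. assert (0 < b) by apply exp_pos.
  assert (Hab : a * b = 1).
  { unfold a, b. rewrite <- exp_plus. replace (y / sqrt 2 + - (y / sqrt 2)) with 0 by ring. apply exp_0. }
  assert (E : 1 - ((a - b) / (a + b)) ^ 2 = 4 / (a + b) ^ 2).
  { field_simplify; try lra. replace (4 * a * b) with 4 by (rewrite Rmult_assoc, Hab; ring). reflexivity. }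
  rewrite E.
  assert (Hm : exp (sqrt 2 * Rabs y) <= (a+b)^2).
  { assert (H3 : exp (sqrt 2 * Rabs y) = (exp (Rabs y / sqrt 2))^2).
    { simpl. rewrite Rmult_1_r, <- exp_plus. f_equal. 
      replace (sqrt 2 * Rabs y) with ((sqrt 2 * sqrt 2) * Rabs y / sqrt 2) by (field; lra).
      rewrite sqrt2_sq. field. lra. }
    rewrite H3. apply pow_incr. split. left; apply exp_pos.
    destruct (Rle_dec 0 y).
    - rewrite Rabs_right by lra. fold a. lra.
    - rewrite Rabs_left by lra.
      replace (- y / sqrt 2) with (- (y / sqrt 2)) by (field; lra). fold b. lra. }
  rewrite exp_Ropp. unfold Rdiv.
  apply Rmult_le_compat_l. lra.
  apply Rinv_le_contravar. apply exp_pos. exact Hm.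
Qed.

Lemma ex_derive_Uprof y : ex_derive (fun x => Uprof x) y.
Proof. exists (Uprof' y). apply is_derive_Uprof. Qed.
Lemma D_Uprof y : Derive (fun x => Uprof x) y = Uprof' y.
Proof. apply is_derive_unique, is_derive_Uprof. Qed.

Lemma is_derive_Uprof' y : is_derive Uprof' y (U2 y).
Proof.
  unfold Uprof'. pose proof sqrt2_pos. auto_derive.
  - apply ex_derive_Uprof.
  - rewrite D_Uprof. unfold U2, P, Uprof'. field_simplify; [|lra].
    replace (sqrt 2 ^ 2) with 2 by (simpl; rewrite Rmult_1_r, sqrt2_sq; auto). field.
Qed.
Lemma ex_derive_Uprof' y : ex_derive (fun x => Uprof' x) y.
Proof. exists (U2 y). apply is_derive_Uprof'. Qed.
Lemma D_Uprof' y : Derive (fun x => Uprof' x) y = U2 y.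
Proof. apply is_derive_unique, is_derive_Uprof'. Qed.

Lemma is_derive_U2 y : is_derive U2 y (U3 y).
Proof.
  unfold U2, P. auto_derive.
  - repeat split; apply ex_derive_Uprof.
  - rewrite D_Uprof. unfold U3. ring.
Qed.
Lemma ex_derive_U2 y : ex_derive (fun x => U2 x) y.
Proof. exists (U3 y). apply is_derive_U2. Qed.
Lemma D_U2 y : Derive (fun x => U2 x) y = U3 y.
Proof. apply is_derive_unique, is_derive_U2. Qed.

Lemma ex_derive_U3 y : ex_derive (fun x => U3 x) y.
Proof.
  unfold U3. auto_derive. split. apply ex_derive_Uprof'. split. apply ex_derive_Uprof. auto.
Qed.

Lemma cont_Uprof y : continuous Uprof y.
Proof. apply (@ex_derive_continuous R_AbsRing R_NormedModule), ex_derive_Uprof. Qed.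
Lemma cont_Uprof' y : continuous Uprof' y.
Proof. apply (@ex_derive_continuous R_AbsRing R_NormedModule), ex_derive_Uprof'. Qed.
Lemma cont_U2 y : continuous U2 y.
Proof. apply (@ex_derive_continuous R_AbsRing R_NormedModule), ex_derive_U2. Qed.
Lemma cont_U3 y : continuous U3 y.
Proof. apply (@ex_derive_continuous R_AbsRing R_NormedModule), ex_derive_U3. Qed.

Lemma U2_f y : U2 y = Defs.f (Uprof y).
Proof. unfold U2, P, Defs.f. ring. Qed.
Lemma U3_f y : U3 y = Uprof' y * (3 * Uprof y ^ 2 - 1).
Proof. reflexivity. Qed.

Lemma Uprof2_le1 y : Uprof y ^ 2 <= 1.
Proof. pose proof (P_pos y). unfold P in H. lra. Qed.

Lemma Uprof'_eq y : Uprof' y = P y / sqrt 2.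
Proof. reflexivity. Qed.

Lemma Uprof'_bound y : Rabs (Uprof' y) <= P y.
Proof.
  rewrite Uprof'_eq. pose proof (P_pos y). pose proof sqrt2_pos.
  rewrite Rabs_right. 2:{ apply Rle_ge, Rdiv_le_0_compat; lra. }
  assert (1 <= sqrt 2). { rewrite <- sqrt_1. apply sqrt_le_1_alt. lra. }
  unfold Rdiv. rewrite <- (Rmult_1_r (P y)) at 2. apply Rmult_le_compat_l. lra.
  rewrite <- Rinv_1. apply Rinv_le_contravar; lra.
Qed.

Lemma U2_bound y : Rabs (U2 y) <= P y.
Proof.
  unfold U2. rewrite Ropp_mult_distr_l_reverse, Rabs_Ropp, Rabs_mult.
  pose proof (P_pos y). rewrite (Rabs_right (P y)) by lra.
  pose proof (Uprof_le1 y). pose proof (Rabs_pos (Uprof y)). nra.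
Qed.

Lemma U3_bound y : Rabs (U3 y) <= 2 * P y.
Proof.
  unfold U3. rewrite Rabs_mult. pose proof (Uprof'_bound y). pose proof (Uprof2_le1 y).
  pose proof (pow2_ge_0 (Uprof y)).
  assert (Rabs (3 * Uprof y ^ 2 - 1) <= 2) by (apply Rabs_le; lra).
  pose proof (Rabs_pos (Uprof' y)). pose proof (Rabs_pos (3 * Uprof y ^ 2 - 1)). nra.
Qed.

Lemma one_minus_U y : 0 <= y -> Rabs (Uprof y - 1) <= P y.
Proof.
  intros. pose proof (Uprof_nonneg y H). pose proof (Uprof_le1 y).
  rewrite Rabs_right in H1 by lra. unfold P.
  rewrite Rabs_left1 by lra. nra.
Qed.

Lemma one_plus_U y : y <= 0 -> Rabs (Uprof y + 1) <= P y.
Proof.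
  intros. pose proof (Uprof_nonpos y H). pose proof (Uprof_le1 y).
  rewrite Rabs_left1 in H1 by lra. unfold P.
  rewrite Rabs_right by lra. nra.
Qed.

Definition G (y : R) : R := sqrt 2 * ln ((exp (y / sqrt 2) + exp (- (y / sqrt 2))) / 2).

Lemma is_derive_G y : is_derive G y (Uprof y).
Proof.
  unfold G, Uprof, Defs.tanh. pose proof sqrt2_pos. auto_derive.
  - apply Rdiv_lt_0_compat. apply Rplus_lt_0_compat; apply exp_pos. lra.
  - unfold Rdiv. set (a := exp (y * / sqrt 2)). set (b := exp (- (y * / sqrt 2))).
    assert (0 < a) by apply exp_pos. assert (0 < b) by apply exp_pos.
    field. split; lra.
Qed.
Lemma D_G y : Derive (fun x => G x) y = Uprof y.
Proof. apply is_derive_unique, is_derive_G. Qed.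
Lemma ex_derive_G y : ex_derive (fun x => G x) y.
Proof. eexists; apply is_derive_G. Qed.

Definition lay2 (e t s x : R) : R := s * U2 ((x - t) / e) / e ^ 2.
Definition lay3 (e t s x : R) : R := s * U3 ((x - t) / e) / e ^ 3.

Lemma Dx_layer e t s x : e <> 0 -> is_derive (fun x => layer e t s x) x (layer' e t s x).
Proof.
  intros He. unfold layer, layer'. auto_derive. apply ex_derive_Uprof.
  rewrite D_Uprof. unfold Rminus, Rdiv; field; auto.
Qed.
Lemma Dx_layer' e t s x : e <> 0 -> is_derive (fun x => layer' e t s x) x (lay2 e t s x).
Proof.
  intros He. unfold layer', lay2. auto_derive. apply ex_derive_Uprof'.
  rewrite D_Uprof'. unfold Rminus, Rdiv; field; auto.
Qed.
Lemma Dx_lay2 e t s x : e <> 0 -> is_derive (fun x => lay2 e t s x) x (lay3 e t s x).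
Proof.
  intros He. unfold lay2, lay3. auto_derive. apply ex_derive_U2.
  rewrite D_U2. unfold Rminus, Rdiv; field; auto.
Qed.
Lemma Dt_layer e t s x : e <> 0 -> is_derive (fun t => layer e t s x) t (- layer' e t s x).
Proof.
  intros He. unfold layer, layer'. auto_derive. apply ex_derive_Uprof.
  rewrite D_Uprof. unfold Rminus, Rdiv; field; auto.
Qed.
Lemma Dt_layer' e t s x : e <> 0 -> is_derive (fun t => layer' e t s x) t (- lay2 e t s x).
Proof.
  intros He. unfold layer', lay2. auto_derive. apply ex_derive_Uprof'.
  rewrite D_Uprof'. unfold Rminus, Rdiv; field; auto.
Qed.
Lemma Dt_lay2 e t s x : e <> 0 -> is_derive (fun t => lay2 e t s x) t (- lay3 e t s x).
Proof.
  intros He. unfold lay2, lay3. auto_derive. apply ex_derive_U2.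
  rewrite D_U2. unfold Rminus, Rdiv; field; auto.
Qed.
Lemma Dt_G e t s c : e <> 0 -> is_derive (fun t => s * e * G ((c - t) / e)) t (- (s * Uprof ((c - t) / e))).
Proof.
  intros He. 
  assert (HG : ex_derive (fun x => G x) ((c - t) / e)) by (eexists; apply is_derive_G).
  auto_derive. auto. rewrite D_G. unfold Rminus, Rdiv; field; auto.
Qed.
Lemma Dx_G e t s x : e <> 0 -> is_derive (fun x => s * e * G ((x - t) / e)) x (layer e t s x).
Proof.
  intros He. unfold layer.
  assert (HG : ex_derive (fun x => G x) ((x - t) / e)) by (eexists; apply is_derive_G).
  auto_derive. auto. rewrite D_G. unfold Rminus, Rdiv; field; auto.
Qed.

Lemma isd_minus (g k : R -> R) dg dk x : is_derive g x dg -> is_derive k x dk -> is_derive (fun y => g y - k y) x (dg - dk).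
Proof. intros. exact (@is_derive_minus R_AbsRing R_NormedModule g k x dg dk H H0). Qed.
Lemma isd_plus (g k : R -> R) dg dk x : is_derive g x dg -> is_derive k x dk -> is_derive (fun y => g y + k y) x (dg + dk).
Proof. intros. exact (@is_derive_plus R_AbsRing R_NormedModule g k x dg dk H H0). Qed.
Lemma isd_id x : is_derive (fun y : R => y) x 1.
Proof. exact (@is_derive_id R_AbsRing x). Qed.
Lemma isd_const (c : R) x : is_derive (fun _ : R => c) x 0.
Proof. exact (@is_derive_const R_AbsRing R_NormedModule c x). Qed.
Lemma isd_sum (F : nat -> R -> R) (d : nat -> R) n x : (forall k, (k <= n)%nat -> is_derive (F k) x (d k)) -> is_derive (fun y => sum_n (fun k => F k y) n) x (sum_n d n).
Proof. intros. exact (@is_derive_sum_n R_AbsRing R_NormedModule F n x d H). Qed.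

Lemma sn_0 (a : nat -> R) : sum_n a 0 = a 0%nat :> R.
Proof. rewrite sum_n_Reals. reflexivity. Qed.
Lemma sn_S (a : nat -> R) n : sum_n a (S n) = sum_n a n + a (S n) :> R.
Proof. rewrite !sum_n_Reals. reflexivity. Qed.

Lemma sn_ext (a b : nat -> R) N : (forall k, (k <= N)%nat -> a k = b k) -> sum_n a N = sum_n b N :> R.
Proof.
  induction N; intros H. rewrite !sn_0. apply H; lia.
  rewrite !sn_S. rewrite IHN by (intros; apply H; lia). rewrite H by lia. auto.
Qed.
Lemma sn_plus (a b : nat -> R) N : sum_n (fun k => a k + b k) N = sum_n a N + sum_n b N :> R.
Proof. induction N. rewrite !sn_0; auto. rewrite !sn_S, IHN. ring. Qed.
Lemma sn_minus (a b : nat -> R) N : sum_n (fun k => a k - b k) N = sum_n a N - sum_n b N :> R.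
Proof. induction N. rewrite !sn_0; auto. rewrite !sn_S, IHN. ring. Qed.
Lemma sn_scal (c : R) (a : nat -> R) N : sum_n (fun k => c * a k) N = c * sum_n a N :> R.
Proof. induction N. rewrite !sn_0; auto. rewrite !sn_S, IHN. ring. Qed.
Lemma sn_const (c : R) N : sum_n (fun _ => c) N = INR (S N) * c :> R.
Proof. induction N. rewrite sn_0. simpl. ring. rewrite !sn_S, IHN. rewrite (S_INR (S N)). ring. Qed.

Lemma sn_bound (a : nat -> R) N B : (forall k, (k <= N)%nat -> Rabs (a k) <= B) ->
  Rabs (sum_n a N) <= INR (S N) * B.
Proof.
  induction N; intros H. rewrite sn_0. simpl. rewrite Rmult_1_l. apply H; lia.
  rewrite sn_S. eapply Rle_trans. apply Rabs_triang.
  rewrite (S_INR (S N)). rewrite Rmult_plus_distr_r, Rmult_1_l.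
  apply Rplus_le_compat. apply IHN. intros; apply H; lia. apply H; lia.
Qed.

Lemma sn_delta (c : R) a N : (a <= N)%nat -> sum_n (fun k => if Nat.eqb k a then c else 0) N = c :> R.
Proof.
  induction N; intros H.
  - rewrite sn_0. assert (a = 0%nat) by lia. subst. reflexivity.
  - rewrite sn_S. destruct (Nat.eq_dec a (S N)).
    + subst. rewrite Nat.eqb_refl.
      rewrite (sn_ext _ (fun _ => 0)). rewrite sn_const. ring.
      intros k Hk. destruct (Nat.eqb_spec k (S N)); [lia|auto].
    + rewrite IHN by lia. destruct (Nat.eqb_spec (S N) a); [lia|ring].
Qed.

Lemma sn_ref a N : (a <= N)%nat ->
  sum_n (fun k => if Nat.ltb k a then 2 * (-1) ^ k else if Nat.eqb k a then (-1) ^ k else 0) N = 1 :> R.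
Proof.
  intros Ha.
  assert (Hg : forall n, @eq R (sum_n (fun k => if Nat.ltb k a then 2 * (-1) ^ k else if Nat.eqb k a then (-1) ^ k else 0) n)
     (if Nat.ltb n a then 1 + (-1) ^ n else 1)).
  { induction n.
    - rewrite sn_0. destruct a; simpl; ring.
    - rewrite sn_S, IHn. destruct (Nat.ltb_spec n a); destruct (Nat.ltb_spec (S n) a).
      + simpl. ring.
      + assert (a = S n) by lia. subst. rewrite Nat.eqb_refl. simpl. ring.
      + lia.
      + destruct (Nat.eqb_spec (S n) a); [lia| ring]. }
  rewrite Hg. destruct (Nat.ltb_spec N a); [lia|auto].
Qed.

Lemma sn_mask (g : nat -> R) a b N : a <> b -> (a <= N)%nat -> (b <= N)%nat ->
  sum_n g N = sum_n (fun k => if Nat.eqb k a then 0 else if Nat.eqb k b then 0 else g k) N + g a + g b :> R.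
Proof.
  intros Hab Ha Hb.
  rewrite <- (sn_delta (g a) a N Ha). rewrite <- (sn_delta (g b) b N Hb).
  rewrite <- !sn_plus. apply sn_ext. intros k _.
  destruct (Nat.eqb_spec k a); destruct (Nat.eqb_spec k b); subst; try lia; ring.
Qed.

Lemma sigma_sq k : ((-1) ^ k) ^ 2 = 1.
Proof. rewrite <- pow_mult, Nat.mul_comm, pow_mult. simpl. replace (-1 * (-1 * 1)) with 1 by ring. apply pow1. Qed.
Lemma sigma_abs k : Rabs ((-1) ^ k) = 1.
Proof. rewrite <- RPow_abs. replace (Rabs (-1)) with 1 by (rewrite Rabs_left; lra). apply pow1. Qed.

Definition Psi e s t x := layer e t s x - layer e t s 0 - layer' e t s 0 * x
  + (layer' e t s 0 - layer' e t s 1) / 2 * x ^ 2.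
Definition dxPsi e s t x := layer' e t s x - layer' e t s 0 + (layer' e t s 0 - layer' e t s 1) * x.
Definition dxxPsi e s t x := lay2 e t s x + layer' e t s 0 - layer' e t s 1.
Definition dtPsi e s t x := - layer' e t s x + layer' e t s 0 + lay2 e t s 0 * x
  - (lay2 e t s 0 - lay2 e t s 1) / 2 * x ^ 2.
Definition dtxPsi e s t x := - lay2 e t s x + lay2 e t s 0 - (lay2 e t s 0 - lay2 e t s 1) * x.
Definition dtxxPsi e s t x := - lay3 e t s x - lay2 e t s 0 + lay2 e t s 1.
Definition PsiI e s t x := s * e * G ((x - t) / e) - layer e t s 0 * x - layer' e t s 0 * x ^ 2 / 2
  + (layer' e t s 0 - layer' e t s 1) / 6 * x ^ 3.
Definition Mk e s t := PsiI e s t 1 - PsiI e s t 0.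
Definition dMk e s t := - (s * Uprof ((1 - t) / e)) + s * Uprof ((0 - t) / e) + layer' e t s 0
  + lay2 e t s 0 / 2 - (lay2 e t s 0 - lay2 e t s 1) / 6.

Ltac exd := repeat split; auto using ex_derive_Uprof, ex_derive_Uprof', ex_derive_U2,
  ex_derive_U3, ex_derive_G.
Ltac rwD := rewrite ?D_Uprof, ?D_Uprof', ?D_U2.
Ltac fin := unfold Rminus, Rdiv; field; auto.

Lemma Dx_Psi e s t x : e <> 0 -> is_derive (Psi e s t) x (dxPsi e s t x).
Proof.
  intros He. unfold Psi, dxPsi, layer, layer'. auto_derive. exd. rwD. fin.
Qed.
Lemma Dx_dxPsi e s t x : e <> 0 -> is_derive (dxPsi e s t) x (dxxPsi e s t x).
Proof.
  intros He. unfold dxPsi, dxxPsi, lay2, layer'. auto_derive. exd. rwD. fin.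
Qed.
Lemma Dx_dtPsi e s t x : e <> 0 -> is_derive (dtPsi e s t) x (dtxPsi e s t x).
Proof.
  intros He. unfold dtPsi, dtxPsi, lay2, layer'. auto_derive. exd. rwD. fin.
Qed.
Lemma Dx_dtxPsi e s t x : e <> 0 -> is_derive (dtxPsi e s t) x (dtxxPsi e s t x).
Proof.
  intros He. unfold dtxPsi, dtxxPsi, lay2, lay3. auto_derive. exd. rwD. fin.
Qed.
Lemma Dt_Psi e s t x : e <> 0 -> is_derive (fun t => Psi e s t x) t (dtPsi e s t x).
Proof.
  intros He. unfold Psi, dtPsi, layer, layer', lay2. auto_derive. exd. rwD. fin.
Qed.
Lemma Dx_PsiI e s t x : e <> 0 -> is_derive (PsiI e s t) x (Psi e s t x).
Proof.
  intros He.
  assert (HG : ex_derive (fun x => G x) ((x - t) / e)) by (eexists; apply is_derive_G).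
  unfold PsiI, Psi, layer, layer'. auto_derive. auto.
  rewrite D_G. fin.
Qed.
Lemma Dt_Mk e s t : e <> 0 -> is_derive (Mk e s) t (dMk e s t).
Proof.
  intros He.
  assert (HG : forall c, ex_derive (fun x => G x) ((c - t) / e)) by (intros; eexists; apply is_derive_G).
  unfold Mk, dMk, PsiI, layer, layer', lay2. auto_derive. exd.
  rewrite !D_G. rwD. fin.
Qed.

Lemma uh_Psi e N h x : uh e N h x = sum_n (fun k => Psi e ((-1) ^ k) (h (S k)) x) N - 1.
Proof.
  unfold uh, betaN, Ssum, Ssum', Psi.
  assert (Hgen : forall (A B C D : nat -> R) n,
    sum_n (fun k => A k - B k - C k * x + (C k - D k) / 2 * x ^ 2) n
    = sum_n A n - sum_n B n - sum_n C n * x + (sum_n C n - sum_n D n) / 2 * x ^ 2 :> R).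
  { intros A B C D n. induction n. rewrite !sn_0. ring. rewrite !sn_S, IHn. field. }
  rewrite Hgen. ring.
Qed.

Definition du e N h x := sum_n (fun k => dxPsi e ((-1) ^ k) (h (S k)) x) N.
Definition ddu e N h x := sum_n (fun k => dxxPsi e ((-1) ^ k) (h (S k)) x) N.

Lemma is_derive_uh e N h x : e <> 0 -> is_derive (uh e N h) x (du e N h x).
Proof.
  intros He.
  apply is_derive_ext with (f := fun x => sum_n (fun k => Psi e ((-1) ^ k) (h (S k)) x) N - 1).
  { intros; symmetry; apply uh_Psi. }
  replace (du e N h x) with (du e N h x - 0) by ring.
  apply isd_minus.
  - unfold du. apply (isd_sum (fun k x => Psi e ((-1) ^ k) (h (S k)) x)).
    intros; apply Dx_Psi; auto.
  - apply isd_const.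
Qed.

Lemma is_derive_du e N h x : e <> 0 -> is_derive (du e N h) x (ddu e N h x).
Proof.
  intros He. unfold du, ddu.
  apply (isd_sum (fun k x => dxPsi e ((-1) ^ k) (h (S k)) x)).
  intros; apply Dx_dxPsi; auto.
Qed.

Lemma ex_derive_uh e N h x : e <> 0 -> ex_derive (uh e N h) x.
Proof. intros; eexists; apply is_derive_uh; auto. Qed.
Lemma ex_derive_du e N h x : e <> 0 -> ex_derive (du e N h) x.
Proof. intros; eexists; apply is_derive_du; auto. Qed.

Lemma cont_uh e N h x : e <> 0 -> continuous (uh e N h) x.
Proof. intros; apply (@ex_derive_continuous R_AbsRing R_NormedModule), ex_derive_uh; auto. Qed.

Lemma mass_formula e N h : e <> 0 ->
  mass e N h = sum_n (fun k => Mk e ((-1) ^ k) (h (S k))) N - 1.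
Proof.
  intros He. unfold mass.
  pose (F := fun x => sum_n (fun k => PsiI e ((-1) ^ k) (h (S k)) x) N - x).
  assert (HI : is_RInt (uh e N h) 0 1 (minus (F 1) (F 0))).
  { apply (is_RInt_derive F).
    - intros x _. unfold F. rewrite uh_Psi. apply isd_minus.
      apply (isd_sum (fun k x => PsiI e ((-1) ^ k) (h (S k)) x)).
      intros; apply Dx_PsiI; auto.
      apply isd_id.
    - intros x _. apply cont_uh; auto. }
  rewrite (is_RInt_unique _ _ _ _ HI). unfold Mk. rewrite sn_minus.
  unfold minus, plus, opp, F; simpl. ring.
Qed.

Lemma isd_comp (f g : R -> R) df dg x : is_derive f (g x) df -> is_derive g x dg ->
  is_derive (fun y => f (g y)) x (dg * df).
Proof. intros. exact (@is_derive_comp R_AbsRing R_NormedModule f g x df dg H H0). Qed.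
Lemma isd_shift (c : R) x : is_derive (fun s => c + s) x 1.
Proof. replace 1 with (0 + 1) by ring. apply isd_plus. apply isd_const. apply isd_id. Qed.

Definition hh N (xi : nat -> R) (H : (nat -> R) -> R) i s := hcat N (shift xi i s) (H (shift xi i s)).

Lemma hh_S N xi H i s k : (1 <= i <= N)%nat -> (k <= N)%nat ->
  hh N xi H i s (S k) = if Nat.eqb k N then H (shift xi i s)
     else if Nat.eqb k (i - 1) then xi i + s else xi (S k).
Proof.
  intros Hi Hk. unfold hh, hcat, shift.
  destruct (Nat.eqb_spec (S k) (N + 1)); destruct (Nat.eqb_spec k N); try lia; auto.
  destruct (Nat.eqb_spec (S k) i); destruct (Nat.eqb_spec k (i - 1)); try lia; auto.
  subst. auto.
Qed.

Lemma shift0 xi i : shift xi i 0 = xi.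
Proof. apply functional_extensionality. intros j. unfold shift. destruct (Nat.eqb j i); ring. Qed.

Lemma sum_hh N xi H i s (Phi : nat -> R -> R) : (1 <= i <= N)%nat ->
  sum_n (fun k => Phi k (hh N xi H i s (S k))) N =
  sum_n (fun k => if Nat.eqb k (i - 1) then 0 else if Nat.eqb k N then 0 else Phi k (xi (S k))) N
  + Phi (i - 1)%nat (xi i + s) + Phi N (H (shift xi i s)) :> R.
Proof.
  intros Hi. rewrite (sn_mask _ (i - 1) N N) by lia.
  rewrite (hh_S N xi H i s (i - 1)) by lia. rewrite (hh_S N xi H i s N) by lia.
  rewrite Nat.eqb_refl. destruct (Nat.eqb_spec (i - 1) N); [lia|]. rewrite Nat.eqb_refl.
  f_equal. f_equal. apply sn_ext. intros k Hk.
  destruct (Nat.eqb_spec k (i - 1)); auto. destruct (Nat.eqb_spec k N); auto.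
  rewrite hh_S by lia. destruct (Nat.eqb_spec k N); [lia|]. destruct (Nat.eqb_spec k (i - 1)); [lia|]. auto.
Qed.

Lemma deriv_sum_hh N xi H i (Phi dPhi : nat -> R -> R) c : (1 <= i <= N)%nat ->
  (forall k t, is_derive (Phi k) t (dPhi k t)) ->
  is_derive (fun s => H (shift xi i s)) 0 c ->
  is_derive (fun s => sum_n (fun k => Phi k (hh N xi H i s (S k))) N) 0
     (dPhi (i - 1)%nat (xi i) + c * dPhi N (H xi)).
Proof.
  intros Hi HP Hc.
  apply is_derive_ext with (f := fun s => sum_n (fun k => if Nat.eqb k (i - 1) then 0 else if Nat.eqb k N then 0 else Phi k (xi (S k))) N
  + Phi (i - 1)%nat (xi i + s) + Phi N (H (shift xi i s))).
  { intros s. symmetry. apply sum_hh. auto. }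
  replace (dPhi (i - 1)%nat (xi i) + c * dPhi N (H xi)) with (0 + 1 * dPhi (i - 1)%nat (xi i) + c * dPhi N (H xi)) by ring.
  apply isd_plus. apply isd_plus. apply isd_const.
  - apply (isd_comp (Phi (i - 1)%nat) (fun s => xi i + s)). replace (xi i + 0) with (xi i) by ring. apply HP. apply isd_shift.
  - apply (isd_comp (Phi N) (fun s => H (shift xi i s))). rewrite shift0. apply HP. auto.
Qed.

Lemma uxi_i_formula e N H xi i x : e <> 0 -> (1 <= i <= N)%nat ->
  ex_derive (fun s => H (shift xi i s)) 0 ->
  uxi_i e N H xi i x = dtPsi e ((-1) ^ (i - 1)) (xi i) x
     + Derive (fun s => H (shift xi i s)) 0 * dtPsi e ((-1) ^ N) (H xi) x.
Proof.
  intros He Hi Hex. unfold uxi_i. apply is_derive_unique.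
  apply is_derive_ext with (f := fun s => sum_n (fun k => Psi e ((-1) ^ k) (hh N xi H i s (S k)) x) N - 1).
  { intros s. unfold uxi. rewrite uh_Psi. reflexivity. }
  replace (dtPsi e ((-1) ^ (i - 1)) (xi i) x + Derive (fun s => H (shift xi i s)) 0 * dtPsi e ((-1) ^ N) (H xi) x)
    with ((dtPsi e ((-1) ^ (i - 1)) (xi i) x + Derive (fun s => H (shift xi i s)) 0 * dtPsi e ((-1) ^ N) (H xi) x) - 0) by ring.
  apply isd_minus. 2: apply isd_const.
  apply (deriv_sum_hh N xi H i (fun k t => Psi e ((-1) ^ k) t x) (fun k t => dtPsi e ((-1) ^ k) t x)); auto.
  intros; apply Dt_Psi; auto.
  apply Derive_correct; auto.
Qed.

Lemma mass_deriv e N mu H xi i : e <> 0 -> (1 <= i <= N)%nat -> mass_map e N mu H xi ->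
  dMk e ((-1) ^ (i - 1)) (xi i) + Derive (fun s => H (shift xi i s)) 0 * dMk e ((-1) ^ N) (H xi) = 0.
Proof.
  intros He Hi [[delta [Hd Hm]] Hex].
  assert (D1 : is_derive (fun s => sum_n (fun k => Mk e ((-1) ^ k) (hh N xi H i s (S k))) N - 1) 0
     (dMk e ((-1) ^ (i - 1)) (xi i) + Derive (fun s => H (shift xi i s)) 0 * dMk e ((-1) ^ N) (H xi) - 0)).
  { apply isd_minus. 2: apply isd_const.
    apply (deriv_sum_hh N xi H i (fun k t => Mk e ((-1) ^ k) t) (fun k t => dMk e ((-1) ^ k) t)); auto.
    intros; apply Dt_Mk; auto. apply Derive_correct; auto. }
  assert (D2 : is_derive (fun s => sum_n (fun k => Mk e ((-1) ^ k) (hh N xi H i s (S k))) N - 1) 0 0).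
  { apply (is_derive_ext_loc (fun _ => mu)). 
    - exists (mkposreal delta Hd). intros y Hy. simpl.
      assert (Rabs y < delta).
      { unfold ball in Hy. simpl in Hy. unfold AbsRing_ball, abs, minus, plus, opp in Hy. simpl in Hy.
        change (Rabs (y + - 0) < delta) in Hy. rewrite Ropp_0, Rplus_0_r in Hy. auto. }
      rewrite <- mass_formula by auto. unfold hh. symmetry. apply Hm; auto.
    - apply isd_const. }
  pose proof (is_derive_unique _ _ _ D1) as E1. pose proof (is_derive_unique _ _ _ D2) as E2.
  rewrite E1 in E2. lra.
Qed.

Lemma exp_mono x y : x <= y -> exp x <= exp y.
Proof. intros. destruct (Req_dec x y). subst; lra. left; apply exp_increasing; lra. Qed.

Lemma div_neg a e : a < 0 -> 0 < e -> a / e < 0.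
Proof. intros. unfold Rdiv. apply Ropp_lt_cancel. rewrite Ropp_0, Ropp_mult_distr_l.
  apply Rmult_lt_0_compat. lra. apply Rinv_0_lt_compat; lra. Qed.
Lemma div_nonneg a e : 0 <= a -> 0 < e -> 0 <= a / e.
Proof. intros. apply Rdiv_le_0_compat; lra. Qed.

Definition Tq e d := exp (- (sqrt 2 * (d / e))).

Lemma Tq_pos e d : 0 < Tq e d.
Proof. apply exp_pos. Qed.

Lemma P_far e d y : 0 < e -> d / e <= Rabs y -> P y <= 4 * Tq e d.
Proof.
  intros He Hy. eapply Rle_trans. apply P_decay. unfold Tq.
  apply Rmult_le_compat_l. lra. apply exp_mono. pose proof sqrt2_pos.
  apply Ropp_le_contravar. apply Rmult_le_compat_l; lra.
Qed.

Lemma PP_far e d p q x : 0 < e -> p + d <= q ->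
  P ((x - p) / e) * P ((x - q) / e) <= 16 * Tq e d.
Proof.
  intros He Hpq. pose proof sqrt2_pos.
  pose proof (P_decay ((x - p) / e)). pose proof (P_decay ((x - q) / e)).
  pose proof (P_pos ((x - p) / e)). pose proof (P_pos ((x - q) / e)).
  eapply Rle_trans. apply Rmult_le_compat; try lra. apply H0. apply H1.
  replace (4 * exp (- (sqrt 2 * Rabs ((x - p) / e))) * (4 * exp (- (sqrt 2 * Rabs ((x - q) / e)))))
    with (16 * exp (- (sqrt 2 * (Rabs ((x - p) / e) + Rabs ((x - q) / e))))).
  2:{ replace (- (sqrt 2 * (Rabs ((x - p) / e) + Rabs ((x - q) / e)))) with
      (- (sqrt 2 * Rabs ((x - p) / e)) + - (sqrt 2 * Rabs ((x - q) / e))) by ring.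
      rewrite exp_plus. ring. }
  unfold Tq. apply Rmult_le_compat_l. lra. apply exp_mono. apply Ropp_le_contravar.
  apply Rmult_le_compat_l. lra.
  assert (d / e <= (x - p) / e - (x - q) / e).
  { unfold Rdiv. rewrite <- Rmult_minus_distr_r. apply Rmult_le_compat_r.
    left; apply Rinv_0_lt_compat; lra. lra. }
  pose proof (Rle_abs ((x - p) / e)) as A1. pose proof (Rle_abs (- ((x - q) / e))) as A2.
  rewrite Rabs_Ropp in A2. lra.
Qed.

Lemma Uplus_far e d p q x : 0 < e -> 0 <= d -> p + d <= q ->
  Rabs (Uprof ((x - p) / e) - 1) * P ((x - q) / e) <= 16 * Tq e d.
Proof.
  intros He Hd Hpq. pose proof (P_pos ((x - q) / e)). pose proof (P_pos ((x - p) / e)).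
  destruct (Rle_dec p x).
  - eapply Rle_trans. 2: apply (PP_far e d p q x); auto.
    apply Rmult_le_compat_r. lra. apply one_minus_U.
    apply Rdiv_le_0_compat; lra.
  - assert (Rabs (Uprof ((x - p) / e) - 1) <= 2).
    { pose proof (Uprof_le1 ((x - p) / e)). apply Rabs_le. apply Rabs_le_between in H1. lra. }
    assert (P ((x - q) / e) <= 4 * Tq e d).
    { apply P_far; auto. rewrite Rabs_left. 
      - unfold Rdiv. rewrite Ropp_mult_distr_l. apply Rmult_le_compat_r.
        left; apply Rinv_0_lt_compat; lra. lra.
      - apply div_neg; lra. }
    pose proof (Tq_pos e d). pose proof (Rabs_pos (Uprof ((x - p) / e) - 1)).
    eapply Rle_trans. apply Rmult_le_compat; eauto; lra. lra.
Qed.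

Lemma Uminus_far e d p q x : 0 < e -> 0 <= d -> p + d <= q ->
  Rabs (Uprof ((x - q) / e) + 1) * P ((x - p) / e) <= 16 * Tq e d.
Proof.
  intros He Hd Hpq.
  replace ((x - q) / e) with (- (((- x) - (- q)) / e)) by (field; lra).
  replace ((x - p) / e) with (- (((- x) - (- p)) / e)) by (field; lra).
  rewrite Uprof_odd.
  assert (HP : forall y, P (- y) = P y) by (intros; unfold P; rewrite Uprof_odd; ring).
  rewrite HP. replace (- Uprof ((- x - - q) / e) + 1) with (- (Uprof ((- x - - q) / e) - 1)) by ring.
  rewrite Rabs_Ropp. apply Uplus_far; auto. lra.
Qed.

Definition Cfg e d N (h : nat -> R) :=
  (0 < e < 1) /\ 0 < d /\ 16 * Tq e d <= e ^ 2 /\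
  (forall k, (k <= N)%nat -> d <= h (S k) <= 1 - d) /\
  (forall k l, (k < l)%nat -> (l <= N)%nat -> h (S k) + d <= h (S l)).

Definition fp (z : R) := 3 * z ^ 2 - 1.

Section Layer.
Variables (e d t s : R).
Hypothesis He : 0 < e.
Hypothesis Hd : 0 < d.
Hypothesis Ht : d <= t <= 1 - d.
Hypothesis Hs : Rabs s = 1.

Let T := Tq e d.

Lemma sq_s : s ^ 2 = 1.
Proof. rewrite <- pow2_abs, Hs. ring. Qed.

Lemma far0 : d / e <= Rabs ((0 - t) / e).
Proof.
  rewrite Rabs_left by (apply div_neg; lra).
  unfold Rdiv. rewrite Ropp_mult_distr_l. apply Rmult_le_compat_r. left; apply Rinv_0_lt_compat; lra. lra.
Qed.
Lemma far1 : d / e <= Rabs ((1 - t) / e).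
Proof.
  rewrite Rabs_right by (apply Rle_ge, div_nonneg; lra).
  unfold Rdiv. apply Rmult_le_compat_r. left; apply Rinv_0_lt_compat; lra. lra.
Qed.

Lemma layer_abs x : Rabs (layer e t s x) <= 1.
Proof. unfold layer. rewrite Rabs_mult, Hs, Rmult_1_l. apply Uprof_le1. Qed.
Lemma layer'_abs x : Rabs (layer' e t s x) <= P ((x - t) / e) / e.
Proof.
  unfold layer', Rdiv. rewrite !Rabs_mult, Hs, Rmult_1_l. rewrite (Rabs_pos_eq (/ e)).
  apply Rmult_le_compat_r. left; apply Rinv_0_lt_compat; lra. apply Uprof'_bound.
  left; apply Rinv_0_lt_compat; lra.
Qed.
Lemma lay2_abs x : Rabs (lay2 e t s x) <= P ((x - t) / e) / e ^ 2.
Proof.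
  unfold lay2, Rdiv. rewrite !Rabs_mult, Hs, Rmult_1_l. rewrite (Rabs_pos_eq (/ e ^ 2)).
  apply Rmult_le_compat_r. left; apply Rinv_0_lt_compat, pow_lt; lra. apply U2_bound.
  left; apply Rinv_0_lt_compat, pow_lt; lra.
Qed.
Lemma lay3_abs x : Rabs (lay3 e t s x) <= 2 * P ((x - t) / e) / e ^ 3.
Proof.
  unfold lay3, Rdiv. rewrite !Rabs_mult, Hs, Rmult_1_l. rewrite (Rabs_pos_eq (/ e ^ 3)).
  apply Rmult_le_compat_r. left; apply Rinv_0_lt_compat, pow_lt; lra. apply U3_bound.
  left; apply Rinv_0_lt_compat, pow_lt; lra.
Qed.

Lemma Pe_pos : 0 < e. Proof. auto. Qed.

Lemma layer0_bd : Rabs (layer e t s 0 + s) <= 4 * T.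
Proof.
  unfold layer. replace (s * Uprof ((0 - t) / e) + s) with (s * (Uprof ((0 - t) / e) + 1)) by ring.
  rewrite Rabs_mult, Hs, Rmult_1_l. eapply Rle_trans. apply one_plus_U.
  left; apply div_neg; lra. apply P_far; auto. apply far0.
Qed.
Lemma U1_bd : Rabs (Uprof ((1 - t) / e) - 1) <= 4 * T.
Proof.
  eapply Rle_trans. apply one_minus_U. apply div_nonneg; lra. apply P_far; auto. apply far1.
Qed.
Lemma U0_bd : Rabs (Uprof ((0 - t) / e) + 1) <= 4 * T.
Proof.
  eapply Rle_trans. apply one_plus_U. left; apply div_neg; lra. apply P_far; auto. apply far0.
Qed.

Lemma divle a b c : 0 < c -> a <= b -> a / c <= b / c.
Proof. intros. unfold Rdiv. apply Rmult_le_compat_r. left; apply Rinv_0_lt_compat; lra. auto. Qed.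

Lemma layer'0_bd : Rabs (layer' e t s 0) <= 4 * T / e.
Proof. eapply Rle_trans. apply layer'_abs. apply divle; auto. apply P_far; auto. apply far0. Qed.
Lemma layer'1_bd : Rabs (layer' e t s 1) <= 4 * T / e.
Proof. eapply Rle_trans. apply layer'_abs. apply divle; auto. apply P_far; auto. apply far1. Qed.
Lemma lay20_bd : Rabs (lay2 e t s 0) <= 4 * T / e ^ 2.
Proof. eapply Rle_trans. apply lay2_abs. apply divle. apply pow_lt; auto. apply P_far; auto. apply far0. Qed.
Lemma lay21_bd : Rabs (lay2 e t s 1) <= 4 * T / e ^ 2.
Proof. eapply Rle_trans. apply lay2_abs. apply divle. apply pow_lt; auto. apply P_far; auto. apply far1. Qed.

Hypothesis He1 : e < 1.

Lemma T_le_Te : T <= T / e.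
Proof. unfold Rdiv. rewrite <- (Rmult_1_r T) at 1. apply Rmult_le_compat_l. left; apply Tq_pos.
  rewrite <- Rinv_1. apply Rinv_le_contravar; lra. Qed.
Lemma Te_le_Te2 : T / e <= T / e ^ 2.
Proof. unfold Rdiv. apply Rmult_le_compat_l. left; apply Tq_pos.
  apply Rinv_le_contravar. apply pow_lt; lra. simpl. nra. Qed.

Lemma poly_bd A B x a b : Rabs A <= a -> Rabs B <= b -> 0 <= x <= 1 -> Rabs (A * x + B * x ^ 2) <= a + b.
Proof.
  intros HA HB Hx. eapply Rle_trans. apply Rabs_triang. rewrite !Rabs_mult.
  rewrite (Rabs_pos_eq x) by lra. rewrite (Rabs_pos_eq (x ^ 2)) by (apply pow_le; lra).
  pose proof (Rabs_pos A). pose proof (Rabs_pos B).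
  assert (x ^ 2 <= 1) by (simpl; nra). apply Rplus_le_compat; nra.
Qed.

Lemma Psi_bd x : 0 <= x <= 1 -> Rabs (Psi e s t x - (layer e t s x - layer e t s 0)) <= 8 * T / e.
Proof.
  intros Hx. unfold Psi.
  replace (layer e t s x - layer e t s 0 - layer' e t s 0 * x + (layer' e t s 0 - layer' e t s 1) / 2 * x ^ 2 -
     (layer e t s x - layer e t s 0)) with ((- layer' e t s 0) * x + ((layer' e t s 0 - layer' e t s 1) / 2) * x ^ 2) by ring.
  replace (8 * T / e) with (4 * T / e + 4 * T / e) by (field; lra).
  apply poly_bd; auto.
  rewrite Rabs_Ropp. apply layer'0_bd.
  unfold Rdiv at 1. rewrite Rabs_mult, (Rabs_pos_eq (/ 2)) by lra.
  pose proof (layer'0_bd). pose proof (layer'1_bd). pose proof (Rabs_triang (layer' e t s 0) (- layer' e t s 1)).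
  rewrite Rabs_Ropp in H1. unfold Rminus. unfold Rdiv in *. lra.
Qed.

Lemma dtPsi_bd x : 0 <= x <= 1 -> Rabs (dtPsi e s t x + layer' e t s x) <= 12 * T / e ^ 2.
Proof.
  intros Hx. unfold dtPsi.
  replace (- layer' e t s x + layer' e t s 0 + lay2 e t s 0 * x - (lay2 e t s 0 - lay2 e t s 1) / 2 * x ^ 2 + layer' e t s x)
    with (layer' e t s 0 + (lay2 e t s 0 * x + (- ((lay2 e t s 0 - lay2 e t s 1) / 2)) * x ^ 2)) by ring.
  eapply Rle_trans. apply Rabs_triang.
  assert (Rabs (lay2 e t s 0 * x + - ((lay2 e t s 0 - lay2 e t s 1) / 2) * x ^ 2) <= 4 * T / e ^ 2 + 4 * T / e ^ 2).
  { apply poly_bd; auto. apply lay20_bd. rewrite Rabs_Ropp.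
    unfold Rdiv at 1. rewrite Rabs_mult, (Rabs_pos_eq (/ 2)) by lra.
    pose proof (lay20_bd). pose proof (lay21_bd). pose proof (Rabs_triang (lay2 e t s 0) (- lay2 e t s 1)).
    rewrite Rabs_Ropp in H1. unfold Rminus. lra. }
  pose proof layer'0_bd. pose proof Te_le_Te2. unfold Rdiv in *. lra.
Qed.

Lemma dtPsi_abs x : 0 <= x <= 1 -> Rabs (dtPsi e s t x) <= P ((x - t) / e) / e + 12 * T / e ^ 2.
Proof.
  intros Hx. pose proof (dtPsi_bd x Hx). pose proof (layer'_abs x).
  pose proof (Rabs_triang (dtPsi e s t x + layer' e t s x) (- layer' e t s x)).
  rewrite Rabs_Ropp in H1. replace (dtPsi e s t x + layer' e t s x + - layer' e t s x) with (dtPsi e s t x) in H1 by ring.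
  lra.
Qed.

Lemma dMk_bd : Rabs (dMk e s t + 2 * s) <= 16 * T / e ^ 2.
Proof.
  unfold dMk.
  replace (- (s * Uprof ((1 - t) / e)) + s * Uprof ((0 - t) / e) + layer' e t s 0 + lay2 e t s 0 / 2 -
    (lay2 e t s 0 - lay2 e t s 1) / 6 + 2 * s) with
    ((- s) * (Uprof ((1 - t) / e) - 1) + s * (Uprof ((0 - t) / e) + 1) + layer' e t s 0 +
     (lay2 e t s 0 * (1/3) + lay2 e t s 1 * (1/6))) by field.
  pose proof U1_bd. pose proof U0_bd. pose proof layer'0_bd. pose proof lay20_bd. pose proof lay21_bd.
  pose proof T_le_Te. pose proof Te_le_Te2.
  set (A := - s * (Uprof ((1 - t) / e) - 1)). set (B := s * (Uprof ((0 - t) / e) + 1)).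
  set (C := layer' e t s 0). set (D := lay2 e t s 0 * (1 / 3) + lay2 e t s 1 * (1 / 6)).
  assert (HA : Rabs A <= 4 * T) by (unfold A; rewrite Rabs_mult, Rabs_Ropp, Hs, Rmult_1_l; auto).
  assert (HB : Rabs B <= 4 * T) by (unfold B; rewrite Rabs_mult, Hs, Rmult_1_l; auto).
  assert (HD : Rabs D <= 4 * T / e ^ 2).
  { unfold D. eapply Rle_trans. apply Rabs_triang. rewrite !Rabs_mult.
    rewrite (Rabs_pos_eq (1/3)) by lra. rewrite (Rabs_pos_eq (1/6)) by lra. assert (0 <= T / e ^ 2) by (apply div_nonneg; [left; apply Tq_pos | apply pow_lt; lra]). unfold Rdiv in *. lra. }
  pose proof (Rabs_triang (A + B + C) D). pose proof (Rabs_triang (A + B) C). pose proof (Rabs_triang A B).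
  fold C in H1. unfold Rdiv in *. lra.
Qed.

Lemma f_layer x : Defs.f (layer e t s x) = s * Defs.f (Uprof ((x - t) / e)).
Proof.
  unfold Defs.f, layer. pose proof sq_s.
  replace ((s * Uprof ((x - t) / e)) ^ 3) with (s ^ 2 * s * Uprof ((x - t) / e) ^ 3) by ring.
  rewrite H. ring.
Qed.

Lemma e2dxx_bd x : Rabs (e ^ 2 * dxxPsi e s t x - Defs.f (layer e t s x)) <= 8 * T.
Proof.
  unfold dxxPsi. rewrite f_layer.
  replace (e ^ 2 * (lay2 e t s x + layer' e t s 0 - layer' e t s 1) - s * Defs.f (Uprof ((x - t) / e)))
    with (e * (e * (layer' e t s 0 - layer' e t s 1))).
  2:{ unfold lay2. rewrite U2_f. field. lra. }
  rewrite !Rabs_mult, (Rabs_pos_eq e) by lra.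
  pose proof layer'0_bd. pose proof layer'1_bd.
  pose proof (Rabs_triang (layer' e t s 0) (- layer' e t s 1)). rewrite Rabs_Ropp in H1.
  assert (e * Rabs (layer' e t s 0 - layer' e t s 1) <= 8 * T).
  { replace (8 * T) with (e * (8 * T / e)) by (field; lra). apply Rmult_le_compat_l. lra.
    unfold Rminus. unfold Rdiv in *. lra. }
  pose proof (Rabs_pos (layer' e t s 0 - layer' e t s 1)). pose proof (Tq_pos e d). fold T in H4. unfold Rminus in *. nra.
Qed.

Lemma e2dtxx_bd x : Rabs (e ^ 2 * dtxxPsi e s t x + fp (layer e t s x) * layer' e t s x) <= 8 * T.
Proof.
  unfold dtxxPsi.
  replace (e ^ 2 * (- lay3 e t s x - lay2 e t s 0 + lay2 e t s 1) + fp (layer e t s x) * layer' e t s x)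
    with (e ^ 2 * (- lay2 e t s 0 + lay2 e t s 1)).
  2:{ unfold lay3, fp, layer, layer'. rewrite U3_f. pose proof sq_s.
      replace ((s * Uprof ((x - t) / e)) ^ 2) with (s ^ 2 * Uprof ((x - t) / e) ^ 2) by ring.
      rewrite H. field. lra. }
  rewrite Rabs_mult, (Rabs_pos_eq (e ^ 2)) by (apply pow_le; lra).
  pose proof lay20_bd. pose proof lay21_bd.
  pose proof (Rabs_triang (- lay2 e t s 0) (lay2 e t s 1)). rewrite Rabs_Ropp in H1.
  replace (8 * T) with (e ^ 2 * (8 * T / e ^ 2)) by (field; lra). apply Rmult_le_compat_l.
  apply pow_le; lra. unfold Rdiv in *. lra.
Qed.

End Layer.

Section Core.
Variables (e d : R) (N : nat) (h : nat -> R).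
Hypothesis HC : Cfg e d N h.

Let T := Tq e d.
Let sg (k : nat) : R := (-1) ^ k.
Let L k x := layer e (h (S k)) (sg k) x.
Let Pk k x := P ((x - h (S k)) / e).

Lemma C_e : 0 < e. Proof. destruct HC as [[? ?] _]; auto. Qed.
Lemma C_e1 : e < 1. Proof. destruct HC as [[? ?] _]; auto. Qed.
Lemma C_d : 0 < d. Proof. destruct HC as [_ [? _]]; auto. Qed.
Lemma C_T : 16 * T <= e ^ 2. Proof. destruct HC as [_ [_ [? _]]]; auto. Qed.
Lemma C_h k : (k <= N)%nat -> d <= h (S k) <= 1 - d. Proof. destruct HC as [_ [_ [_ [? _]]]]; auto. Qed.
Lemma C_ord k l : (k < l)%nat -> (l <= N)%nat -> h (S k) + d <= h (S l).
Proof. destruct HC as [_ [_ [_ [_ ?]]]]; auto. Qed.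
Lemma C_Tpos : 0 < T. Proof. apply Tq_pos. Qed.
Lemma C_TTe : T <= T / e. Proof. apply (T_le_Te e d); [apply C_e | apply C_e1]. Qed.
Lemma C_sg k : Rabs (sg k) = 1. Proof. apply sigma_abs. Qed.
Lemma C_Te_small : T / e <= 1 / 16.
Proof.
  pose proof C_T. pose proof C_e. pose proof C_e1. pose proof C_Tpos.
  apply Rmult_le_reg_r with e. auto. unfold Rdiv. rewrite Rmult_assoc, Rinv_l by lra.
  simpl in H. nra.
Qed.

Lemma Psi_split k x : (k <= N)%nat -> 0 <= x <= 1 ->
  Rabs (Psi e (sg k) (h (S k)) x - (L k x - L k 0)) <= 8 * T / e.
Proof.
  intros Hk Hx. apply (Psi_bd e d); auto using C_e, C_d, C_h, C_sg, C_e1.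
Qed.

Lemma Pk_pos k x : 0 < Pk k x. Proof. apply P_pos. Qed.
Lemma Pk_le1 k x : Pk k x <= 1. Proof. apply P_le1. Qed.

Definition Qk a x k := Psi e (sg k) (h (S k)) x -
  (if Nat.ltb k a then 2 * sg k else if Nat.eqb k a then sg k + L a x else 0).

Lemma Qk_bd a x k : (a <= N)%nat -> (k <= N)%nat -> 0 <= x <= 1 ->
  Rabs (Qk a x k) * Pk a x <= 28 * T / e.
Proof.
  intros Ha Hk Hx. unfold Qk.
  pose proof (Psi_split k x Hk Hx) as Hb.
  set (bd := Psi e (sg k) (h (S k)) x - (L k x - L k 0)) in Hb.
  pose proof (Pk_pos a x). pose proof (Pk_le1 a x). pose proof C_TTe. pose proof C_Tpos.
  pose proof (layer0_bd e d (h (S k)) (sg k) C_e C_d (C_h k Hk) (C_sg k)) as H0k. fold T in H0k.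
  destruct (Nat.ltb_spec k a).
  - replace (Psi e (sg k) (h (S k)) x - 2 * sg k) with ((L k x - sg k) - (L k 0 + sg k) + bd) by (unfold bd; ring).
    assert (HU : Rabs (L k x - sg k) * Pk a x <= 16 * T).
    { unfold L, layer. replace (sg k * Uprof ((x - h (S k)) / e) - sg k) with (sg k * (Uprof ((x - h (S k)) / e) - 1)) by ring.
      rewrite Rabs_mult, C_sg, Rmult_1_l. apply Uplus_far. apply C_e. left; apply C_d. apply C_ord; lia. }
    assert (Rabs ((L k x - sg k) - (L k 0 + sg k) + bd) <= Rabs (L k x - sg k) + Rabs (L k 0 + sg k) + Rabs bd).
    { eapply Rle_trans. apply Rabs_triang. unfold Rminus at 1. pose proof (Rabs_triang (L k x - sg k) (- (L k 0 + sg k))) as Ht.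
      rewrite Rabs_Ropp in Ht. lra. }
    pose proof (Rabs_pos (L k 0 + sg k)). pose proof (Rabs_pos bd). unfold L in *.
    assert (Rabs (layer e (h (S k)) (sg k) 0 + sg k) * Pk a x <= 4 * T) by nra.
    assert (Rabs bd * Pk a x <= 8 * T / e) by nra.
    unfold Rdiv in *. nra.
  - destruct (Nat.eqb_spec k a).
    + subst k. replace (Psi e (sg a) (h (S a)) x - (sg a + L a x)) with (- (L a 0 + sg a) + bd) by (unfold bd; ring).
      assert (Rabs (- (L a 0 + sg a) + bd) <= Rabs (L a 0 + sg a) + Rabs bd).
      { eapply Rle_trans. apply Rabs_triang. rewrite Rabs_Ropp. lra. }
      pose proof (Rabs_pos (L a 0 + sg a)). pose proof (Rabs_pos bd). unfold L in *.
      unfold Rdiv in *. nra.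
    + assert (a < k)%nat by lia.
      replace (Psi e (sg k) (h (S k)) x - 0) with ((L k x + sg k) - (L k 0 + sg k) + bd) by (unfold bd; ring).
      assert (HU : Rabs (L k x + sg k) * Pk a x <= 16 * T).
      { unfold L, layer. replace (sg k * Uprof ((x - h (S k)) / e) + sg k) with (sg k * (Uprof ((x - h (S k)) / e) + 1)) by ring.
        rewrite Rabs_mult, C_sg, Rmult_1_l. apply Uminus_far. apply C_e. left; apply C_d. apply C_ord; lia. }
      assert (Rabs ((L k x + sg k) - (L k 0 + sg k) + bd) <= Rabs (L k x + sg k) + Rabs (L k 0 + sg k) + Rabs bd).
      { eapply Rle_trans. apply Rabs_triang. unfold Rminus at 1. pose proof (Rabs_triang (L k x + sg k) (- (L k 0 + sg k))) as Ht.
        rewrite Rabs_Ropp in Ht. lra. }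
      pose proof (Rabs_pos (L k 0 + sg k)). pose proof (Rabs_pos bd). unfold L in *.
      assert (Rabs (layer e (h (S k)) (sg k) 0 + sg k) * Pk a x <= 4 * T) by nra.
      assert (Rabs bd * Pk a x <= 8 * T / e) by nra.
      unfold Rdiv in *. nra.
Qed.

Lemma sum_Qk a x : (a <= N)%nat -> uh e N h x - L a x = sum_n (Qk a x) N.
Proof.
  intros Ha. unfold Qk. rewrite sn_minus, uh_Psi.
  rewrite (sn_ext (fun k => if Nat.ltb k a then 2 * sg k else if Nat.eqb k a then sg k + L a x else 0) (fun k => (if Nat.ltb k a then 2 * (-1) ^ k else if Nat.eqb k a then (-1) ^ k else 0)
      + (if Nat.eqb k a then L a x else 0))).
  2:{ intros k _. unfold sg. destruct (Nat.ltb_spec k a); destruct (Nat.eqb_spec k a); try lia; subst; ring. }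
  rewrite sn_plus, sn_ref, sn_delta by auto. unfold sg. ring.
Qed.

Lemma sum_scal_bd (q : nat -> R) (p B : R) : 0 < p -> (forall k, (k <= N)%nat -> Rabs (q k) * p <= B) ->
  Rabs (sum_n q N) * p <= INR (S N) * B.
Proof.
  intros Hp Hq. rewrite <- (Rabs_pos_eq p) by lra. rewrite <- Rabs_mult.
  rewrite Rmult_comm, <- sn_scal. apply sn_bound. intros k Hk. rewrite Rabs_mult, (Rabs_pos_eq p) by lra.
  rewrite Rmult_comm. auto.
Qed.

Lemma core_u a x : (a <= N)%nat -> 0 <= x <= 1 ->
  Rabs (uh e N h x - L a x) * Pk a x <= INR (S N) * (28 * T / e).
Proof.
  intros Ha Hx. rewrite sum_Qk by auto. apply sum_scal_bd. apply Pk_pos.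
  intros k Hk. apply Qk_bd; auto.
Qed.

Lemma u_bd x : 0 <= x <= 1 -> Rabs (uh e N h x) <= 3 * INR (S N) + 1.
Proof.
  intros Hx. rewrite uh_Psi.
  assert (Rabs (sum_n (fun k => Psi e ((-1) ^ k) (h (S k)) x) N) <= INR (S N) * 3).
  { apply sn_bound. intros k Hk. pose proof (Psi_split k x Hk Hx).
    pose proof (layer_abs e (h (S k)) (sg k) (C_sg k) x). pose proof (layer_abs e (h (S k)) (sg k) (C_sg k) 0).
    pose proof C_Te_small. unfold L, sg in *.
    pose proof (Rabs_triang (Psi e ((-1) ^ k) (h (S k)) x - (layer e (h (S k)) ((-1) ^ k) x - layer e (h (S k)) ((-1) ^ k) 0))
       (layer e (h (S k)) ((-1) ^ k) x - layer e (h (S k)) ((-1) ^ k) 0)).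
    pose proof (Rabs_triang (layer e (h (S k)) ((-1) ^ k) x) (- layer e (h (S k)) ((-1) ^ k) 0)).
    rewrite Rabs_Ropp in H4. unfold Rminus in *.
    replace (Psi e ((-1) ^ k) (h (S k)) x + - (layer e (h (S k)) ((-1) ^ k) x + - layer e (h (S k)) ((-1) ^ k) 0) +
      (layer e (h (S k)) ((-1) ^ k) x + - layer e (h (S k)) ((-1) ^ k) 0)) with (Psi e ((-1) ^ k) (h (S k)) x) in H3 by ring.
    unfold Rdiv in *. lra. }
  pose proof (Rabs_triang (sum_n (fun k => Psi e ((-1) ^ k) (h (S k)) x) N) (Ropp 1)).
  rewrite Rabs_Ropp, Rabs_R1 in H0. unfold Rminus. lra.
Qed.

Definition Ku := 3 * INR (S N) + 1.
Definition Kf := 2 + Ku + Ku ^ 2.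
Lemma Ku_pos : 1 <= Ku. Proof. unfold Ku. pose proof (pos_INR (S N)). lra. Qed.

Lemma C_T_small : 8 * T <= 1.
Proof. pose proof C_T. pose proof C_e. pose proof C_e1. simpl in H. nra. Qed.

Lemma f_diff A B : Rabs A <= 1 -> Rabs B <= Ku -> Rabs (Defs.f A - Defs.f B) <= Kf * Rabs (A - B).
Proof.
  intros HA HB. unfold Defs.f, Kf.
  replace (A ^ 3 - A - (B ^ 3 - B)) with ((A - B) * (A ^ 2 + A * B + B ^ 2 - 1)) by ring.
  rewrite Rabs_mult, Rmult_comm. apply Rmult_le_compat_r. apply Rabs_pos.
  pose proof Ku_pos. pose proof (Rabs_pos A). pose proof (Rabs_pos B).
  assert (Rabs (A ^ 2) <= 1) by (rewrite <- RPow_abs; simpl; nra).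
  assert (Rabs (A * B) <= Ku) by (rewrite Rabs_mult; nra).
  assert (Rabs (B ^ 2) <= Ku ^ 2) by (rewrite <- RPow_abs; simpl; nra).
  pose proof (Rabs_triang (A ^ 2 + A * B + B ^ 2) (Ropp 1)) as T1. pose proof (Rabs_triang (A ^ 2 + A * B) (B ^ 2)).
  pose proof (Rabs_triang (A ^ 2) (A * B)). rewrite Rabs_Ropp, Rabs_R1 in T1. unfold Rminus. lra.
Qed.

Lemma fL_bd k x : (k <= N)%nat -> Rabs (Defs.f (L k x)) <= Pk k x.
Proof.
  intros Hk. unfold L. rewrite f_layer by (apply C_sg). rewrite Rabs_mult, C_sg, Rmult_1_l.
  unfold Defs.f, Pk, P. set (U := Uprof ((x - h (S k)) / e)).
  replace (U ^ 3 - U) with (- U * (1 - U ^ 2)) by ring. rewrite Rabs_mult, Rabs_Ropp.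
  pose proof (Uprof_le1 ((x - h (S k)) / e)). fold U in H.
  pose proof (P_pos ((x - h (S k)) / e)). unfold P in H0. fold U in H0.
  rewrite (Rabs_pos_eq (1 - U ^ 2)) by lra. pose proof (Rabs_pos U). nra.
Qed.

Lemma e2dxx_k k x : (k <= N)%nat -> Rabs (e ^ 2 * dxxPsi e (sg k) (h (S k)) x - Defs.f (L k x)) <= 8 * T.
Proof. intros Hk. apply (e2dxx_bd e d); auto using C_e, C_d, C_h, C_sg, C_e1. Qed.

Lemma PP_kl k a x : (k <= N)%nat -> (a <= N)%nat -> k <> a -> Pk k x * Pk a x <= 16 * T.
Proof.
  intros Hk Ha Hka. unfold Pk. destruct (Nat.lt_ge_cases k a).
  - apply PP_far. apply C_e. apply C_ord; lia.
  - rewrite Rmult_comm. apply PP_far. apply C_e. apply C_ord; lia.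
Qed.

Lemma Lu_P a x : (a <= N)%nat -> 0 <= x <= 1 ->
  Rabs (e ^ 2 * ddu e N h x - Defs.f (uh e N h x)) * Pk a x
    <= INR (S N) * (24 * T) + Kf * (INR (S N) * (28 * T / e)).
Proof.
  intros Ha Hx.
  set (Rk := fun k => e ^ 2 * dxxPsi e (sg k) (h (S k)) x - (if Nat.eqb k a then Defs.f (L a x) else 0)).
  assert (ES : e ^ 2 * ddu e N h x - Defs.f (uh e N h x) = sum_n Rk N + (Defs.f (L a x) - Defs.f (uh e N h x))).
  { unfold Rk, ddu. rewrite sn_minus, sn_delta by auto. rewrite <- sn_scal. unfold sg. ring. }
  rewrite ES.
  assert (H1 : Rabs (sum_n Rk N) * Pk a x <= INR (S N) * (24 * T)).
  { apply sum_scal_bd. apply Pk_pos. intros k Hk. unfold Rk.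
    pose proof (Pk_pos a x). pose proof (Pk_le1 a x). pose proof C_Tpos.
    destruct (Nat.eqb_spec k a).
    - subst. pose proof (e2dxx_k a x Ha). nra.
    - rewrite Rminus_0_r. pose proof (e2dxx_k k x Hk). pose proof (fL_bd k x Hk). pose proof (PP_kl k a x Hk Ha n).
      pose proof (Rabs_triang (e ^ 2 * dxxPsi e (sg k) (h (S k)) x - Defs.f (L k x)) (Defs.f (L k x))) as T1.
      replace (e ^ 2 * dxxPsi e (sg k) (h (S k)) x - Defs.f (L k x) + Defs.f (L k x)) with (e ^ 2 * dxxPsi e (sg k) (h (S k)) x) in T1 by ring.
      pose proof (Pk_pos k x). pose proof (Rabs_pos (Defs.f (L k x))). nra. }
  assert (H2 : Rabs (Defs.f (L a x) - Defs.f (uh e N h x)) * Pk a x <= Kf * (INR (S N) * (28 * T / e))).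
  { pose proof (f_diff (L a x) (uh e N h x)). unfold L in H. 
    specialize (H (layer_abs e _ _ (C_sg a) x) (u_bd x Hx)). fold (L a x) in H.
    pose proof (core_u a x Ha Hx). rewrite Rabs_minus_sym in H0.
    pose proof (Pk_pos a x). pose proof Ku_pos.
    apply Rle_trans with (Kf * Rabs (L a x - uh e N h x) * Pk a x). apply Rmult_le_compat_r; lra.
    unfold Kf. rewrite Rmult_assoc. apply Rmult_le_compat_l. nra. auto. }
  pose proof (Rabs_triang (sum_n Rk N) (Defs.f (L a x) - Defs.f (uh e N h x))). pose proof (Pk_pos a x). nra.
Qed.

Definition KL := 2 * INR (S N) + Ku ^ 3 + Ku.
Definition Kg := 84 * (Ku + 1) * INR (S N) + 8 + 12 * (3 * Ku ^ 2 + 1).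
Definition KD := INR (S N) * 24 + Kf * (INR (S N) * 28) + 12 * KL.

Lemma C_Te2 : T / e <= T / e ^ 2. Proof. apply (Te_le_Te2 e d); [apply C_e | apply C_e1]. Qed.
Lemma C_T_Te2 : T <= T / e ^ 2. Proof. pose proof C_TTe. pose proof C_Te2. lra. Qed.

Lemma Lu_bd x : 0 <= x <= 1 -> Rabs (e ^ 2 * ddu e N h x - Defs.f (uh e N h x)) <= KL.
Proof.
  intros Hx. unfold KL.
  assert (Rabs (e ^ 2 * ddu e N h x) <= INR (S N) * 2).
  { unfold ddu. rewrite <- sn_scal. apply sn_bound. intros k Hk.
    pose proof (e2dxx_k k x Hk). pose proof (fL_bd k x Hk). pose proof (Pk_le1 k x). pose proof C_T_small.
    pose proof (Rabs_triang (e ^ 2 * dxxPsi e (sg k) (h (S k)) x - Defs.f (L k x)) (Defs.f (L k x))) as T1.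
    replace (e ^ 2 * dxxPsi e (sg k) (h (S k)) x - Defs.f (L k x) + Defs.f (L k x)) with (e ^ 2 * dxxPsi e (sg k) (h (S k)) x) in T1 by ring.
    unfold sg in *. lra. }
  assert (Rabs (Defs.f (uh e N h x)) <= Ku ^ 3 + Ku).
  { pose proof (u_bd x Hx). fold Ku in H0. unfold Defs.f. set (u := uh e N h x) in *.
    pose proof (Rabs_triang (u ^ 3) (- u)). rewrite Rabs_Ropp in H1. rewrite <- RPow_abs in H1.
    pose proof (Rabs_pos u). assert (Rabs u ^ 3 <= Ku ^ 3) by (apply pow_incr; lra). unfold Rminus. lra. }
  pose proof (Rabs_triang (e ^ 2 * ddu e N h x) (- Defs.f (uh e N h x))). rewrite Rabs_Ropp in H1.
  unfold Rminus. lra.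
Qed.

Lemma dtj_abs j x : (j <= N)%nat -> 0 <= x <= 1 ->
  Rabs (dtPsi e (sg j) (h (S j)) x) <= Pk j x / e + 12 * T / e ^ 2.
Proof. intros Hj Hx. apply (dtPsi_abs e d); auto using C_e, C_d, C_h, C_sg, C_e1. Qed.

Lemma dtj_abs2 j x : (j <= N)%nat -> 0 <= x <= 1 -> Rabs (dtPsi e (sg j) (h (S j)) x) <= 2 / e.
Proof.
  intros Hj Hx. pose proof (dtj_abs j x Hj Hx). pose proof (Pk_le1 j x). pose proof C_e. pose proof C_e1.
  assert (T / e ^ 2 <= 1 / 16).
  { pose proof C_T. apply Rmult_le_reg_r with (e ^ 2). apply pow_lt; lra.
    unfold Rdiv. rewrite Rmult_assoc, Rinv_l by (apply pow_nonzero; lra). lra. }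
  assert (1 <= 1 / e). { unfold Rdiv. rewrite Rmult_1_l. rewrite <- Rinv_1. apply Rinv_le_contravar; lra. }
  assert (Pk j x / e <= 1 / e) by (apply divle; auto).
  unfold Rdiv in *. lra.
Qed.

Lemma gj_bd j x : (j <= N)%nat -> 0 <= x <= 1 ->
  Rabs (e ^ 2 * dtxxPsi e (sg j) (h (S j)) x - fp (uh e N h x) * dtPsi e (sg j) (h (S j)) x) <= Kg * (T / e ^ 2).
Proof.
  intros Hj Hx.
  set (u := uh e N h x). set (Lj := L j x). set (L1 := layer' e (h (S j)) (sg j) x).
  set (r := e ^ 2 * dtxxPsi e (sg j) (h (S j)) x + fp Lj * L1).
  set (sj := dtPsi e (sg j) (h (S j)) x + L1).
  assert (Hr : Rabs r <= 8 * T) by (apply (e2dtxx_bd e d); auto using C_e, C_d, C_h, C_sg, C_e1).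
  assert (Hs : Rabs sj <= 12 * T / e ^ 2) by (apply (dtPsi_bd e d); auto using C_e, C_d, C_h, C_sg, C_e1).
  replace (e ^ 2 * dtxxPsi e (sg j) (h (S j)) x - fp u * dtPsi e (sg j) (h (S j)) x)
    with ((fp u - fp Lj) * L1 + r - fp u * sj) by (unfold r, sj; ring).
  assert (HL1 : Rabs L1 <= Pk j x / e) by (apply layer'_abs; auto using C_sg, C_e).
  assert (Hu : Rabs u <= Ku) by (apply u_bd; auto).
  assert (HLj : Rabs Lj <= 1) by (apply layer_abs; auto using C_sg).
  assert (Hcore : Rabs (u - Lj) * Pk j x <= INR (S N) * (28 * T / e)) by (apply core_u; auto).
  assert (Hfp : Rabs (fp u - fp Lj) <= 3 * (Ku + 1) * Rabs (u - Lj)).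
  { unfold fp. replace (3 * u ^ 2 - 1 - (3 * Lj ^ 2 - 1)) with (3 * (u + Lj) * (u - Lj)) by ring.
    rewrite !Rabs_mult. rewrite (Rabs_pos_eq 3) by lra. pose proof (Rabs_triang u Lj).
    pose proof (Rabs_pos (u - Lj)). pose proof (Rabs_pos (u + Lj)). nra. }
  assert (H1 : Rabs ((fp u - fp Lj) * L1) <= 3 * (Ku + 1) * INR (S N) * 28 * (T / e ^ 2)).
  { rewrite Rabs_mult. pose proof (Rabs_pos (fp u - fp Lj)). pose proof (Rabs_pos L1).
    pose proof C_e. pose proof C_Te2. pose proof Ku_pos. pose proof (pos_INR (S N)). pose proof C_Tpos.
    apply Rle_trans with (3 * (Ku + 1) * Rabs (u - Lj) * (Pk j x / e)). apply Rmult_le_compat; nra.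
    unfold Rdiv. replace (3 * (Ku + 1) * Rabs (u - Lj) * (Pk j x * / e)) with (3 * (Ku + 1) * (Rabs (u - Lj) * Pk j x) * / e) by ring.
    apply Rle_trans with (3 * (Ku + 1) * (INR (S N) * (28 * T / e)) * / e).
    apply Rmult_le_compat_r. left; apply Rinv_0_lt_compat; lra. apply Rmult_le_compat_l; nra.
    unfold Rdiv in *. replace (3 * (Ku + 1) * (INR (S N) * (28 * T * / e)) * / e) with (3 * (Ku + 1) * INR (S N) * 28 * (T * / e * / e)) by ring.
    apply Rmult_le_compat_l. nra. replace (T * / e * / e) with (T * / e ^ 2). lra. field. lra. }
  assert (H2 : Rabs (fp u * sj) <= (3 * Ku ^ 2 + 1) * (12 * (T / e ^ 2))).
  { rewrite Rabs_mult. apply Rmult_le_compat. apply Rabs_pos. apply Rabs_pos.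
    unfold fp. pose proof (Rabs_triang (3 * u ^ 2) (Ropp 1)). rewrite Rabs_Ropp, Rabs_R1, Rabs_mult, <- RPow_abs in H.
    rewrite (Rabs_pos_eq 3) in H by lra. pose proof (Rabs_pos u). assert (Rabs u ^ 2 <= Ku ^ 2) by (apply pow_incr; lra).
    unfold Rminus. lra. unfold Rdiv in *. lra. }
  pose proof C_T_Te2 as HT. unfold Kg.
  pose proof (Rabs_triang ((fp u - fp Lj) * L1 + r) (- (fp u * sj))) as T1. rewrite Rabs_Ropp in T1.
  replace ((fp u - fp Lj) * L1 + r + - (fp u * sj)) with ((fp u - fp Lj) * L1 + r - fp u * sj) in T1 by ring.
  pose proof (Rabs_triang ((fp u - fp Lj) * L1) r) as T2. unfold Rdiv in *. lra.
Qed.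

Lemma dtLu_bd j x : (j <= N)%nat -> 0 <= x <= 1 ->
  Rabs (dtPsi e (sg j) (h (S j)) x * (e ^ 2 * ddu e N h x - Defs.f (uh e N h x))) <= KD * (T / e ^ 2).
Proof.
  intros Hj Hx. rewrite Rabs_mult. set (Lu := e ^ 2 * ddu e N h x - Defs.f (uh e N h x)).
  pose proof (dtj_abs j x Hj Hx). pose proof (Lu_P j x Hj Hx). fold Lu in H0. pose proof (Lu_bd x Hx). fold Lu in H1.
  pose proof (Rabs_pos Lu). pose proof (Rabs_pos (dtPsi e (sg j) (h (S j)) x)).
  apply Rle_trans with ((Pk j x / e + 12 * T / e ^ 2) * Rabs Lu). apply Rmult_le_compat_r; auto.
  pose proof C_e. pose proof C_e1. pose proof C_Tpos. pose proof Ku_pos. pose proof (pos_INR (S N)).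
  assert (Kf >= 0) by (unfold Kf; nra).
  assert (E1 : Pk j x / e * Rabs Lu <= (INR (S N) * 24 + Kf * (INR (S N) * 28)) * (T / e ^ 2)).
  { unfold Rdiv. replace (Pk j x * / e * Rabs Lu) with (Rabs Lu * Pk j x * / e) by ring.
    apply Rle_trans with ((INR (S N) * (24 * T) + Kf * (INR (S N) * (28 * T / e))) * / e).
    apply Rmult_le_compat_r. left; apply Rinv_0_lt_compat; lra. auto.
    pose proof C_TTe. pose proof C_Te2. unfold Rdiv in *.
    replace ((INR (S N) * (24 * T) + Kf * (INR (S N) * (28 * T * / e))) * / e) with
       (INR (S N) * 24 * (T * / e) + Kf * (INR (S N) * 28) * (T * / e * / e)) by ring.
    replace (T * / e * / e) with (T * / e ^ 2) by (field; lra).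
    assert (INR (S N) * 24 * (T * / e) <= INR (S N) * 24 * (T * / e ^ 2)) by (apply Rmult_le_compat_l; lra).
    nra. }
  unfold KD. unfold Rdiv in *. pose proof (Rmult_le_compat_l (12 * T * / e ^ 2) _ _ ltac:(assert (0 <= T * / e ^ 2) by (apply Rmult_le_pos; [lra| left; apply Rinv_0_lt_compat, pow_lt; lra]); lra) H1).
  nra.
Qed.

End Core.

Lemma Cfg_of_Omega e k0 N h : 0 < e -> InOmega e k0 N h ->
  (forall k, (k <= N)%nat -> e / rho e k0 / 2 <= h (S k) <= 1 - e / rho e k0 / 2) /\
  (forall k l, (k < l)%nat -> (l <= N)%nat -> h (S k) + e / rho e k0 / 2 <= h (S l)).
Proof.
  intros He [H0 [Hinc [Hlast Hgap]]].
  set (D := e / rho e k0).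
  assert (HD : 0 < D). { unfold D, rho, Rpower. apply Rdiv_lt_0_compat; auto. apply exp_pos. }
  assert (Hh1 : D / 2 < h 1%nat).
  { specialize (Hgap 0%nat ltac:(lia)).
    assert (E1 : hext N h 1 = h 1%nat).
    { unfold hext. destruct (Nat.eqb_spec 1 0); [lia|]. destruct (Nat.eqb_spec 1 (N + 2)); [lia|]. auto. }
    assert (E0 : hext N h 0 = - h 1%nat) by reflexivity.
    rewrite E1, E0 in Hgap.
    replace (h 1%nat - - h 1%nat) with (2 * h 1%nat) in Hgap by ring.
    rewrite Rabs_right in Hgap by lra. fold D in Hgap. lra. }
  assert (HhN : h (N + 1)%nat < 1 - D / 2).
  { specialize (Hgap (N + 1)%nat ltac:(lia)). unfold hext in Hgap.
    replace (S (N + 1)) with (N + 2)%nat in Hgap by lia. rewrite Nat.eqb_refl in Hgap.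
    destruct (Nat.eqb_spec (N + 2) 0); [lia|].
    destruct (Nat.eqb_spec (N + 1) 0); [lia|]. destruct (Nat.eqb_spec (N + 1) (N + 2)); [lia|].
    replace (2 - h (N + 1)%nat - h (N + 1)%nat) with (2 * (1 - h (N + 1)%nat)) in Hgap by ring.
    rewrite Rabs_right in Hgap by lra. fold D in Hgap. lra. }
  assert (Hcons : forall j, (1 <= j <= N)%nat -> h j + D <= h (S j)).
  { intros j Hj. specialize (Hgap j ltac:(lia)). specialize (Hinc j Hj). unfold hext in Hgap.
    destruct (Nat.eqb_spec (S j) 0); [lia|]. destruct (Nat.eqb_spec (S j) (N + 2)); [lia|].
    destruct (Nat.eqb_spec j 0); [lia|]. destruct (Nat.eqb_spec j (N + 2)); [lia|].
    rewrite Rabs_right in Hgap by lra. fold D in Hgap. lra. }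
  assert (Hmono : forall k n, (S k + n <= N + 1)%nat -> h (S k) + D * INR n <= h (S k + n)%nat).
  { intros k n. induction n; intros Hn.
    - replace (S k + 0)%nat with (S k) by lia. change (INR 0) with 0. rewrite Rmult_0_r. lra.
    - rewrite S_INR. replace (S k + S n)%nat with (S (S k + n)) by lia.
      pose proof (Hcons (S k + n)%nat ltac:(lia)). specialize (IHn ltac:(lia)). lra. }
  split.
  - intros k Hk. pose proof (Hmono 0%nat k ltac:(lia)). pose proof (Hmono k (N - k)%nat ltac:(lia)).
    replace (S 0 + k)%nat with (S k) in H by lia. replace (S k + (N - k))%nat with (N + 1)%nat in H1 by lia.
    pose proof (pos_INR k). pose proof (pos_INR (N - k)).
    assert (0 <= D * INR k) by (apply Rmult_le_pos; lra). assert (0 <= D * INR (N - k)) by (apply Rmult_le_pos; lra).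
    split; lra.
  - intros k l Hkl Hl. pose proof (Hmono k (l - k)%nat ltac:(lia)). replace (S k + (l - k))%nat with (S l) in H by lia.
    assert (1 <= INR (l - k)). { replace 1 with (INR 1) by reflexivity. apply le_INR. lia. }
    assert (D * 1 <= D * INR (l - k)) by (apply Rmult_le_compat_l; lra). lra.
Qed.

Lemma Rp_mono e a b : 0 < e < 1 -> a <= b -> Rpower e b <= Rpower e a.
Proof.
  intros He Hab. unfold Rpower. apply exp_mono. assert (ln e < 0).
  { rewrite <- ln_1. apply ln_increasing; lra. } nra.
Qed.

Lemma exp_sq w : 0 <= w -> w ^ 2 / 4 <= exp w.
Proof.
  intros Hw. replace (exp w) with (exp (w / 2) ^ 2).
  2:{ simpl. rewrite Rmult_1_r, <- exp_plus. f_equal. field. }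
  assert (w / 2 <= exp (w / 2)).
  { destruct (Req_dec w 0). subst. unfold Rdiv. rewrite Rmult_0_l, exp_0. lra.
    pose proof (exp_ineq1 (w / 2) ltac:(intro; apply H; lra)). lra. }
  replace (w ^ 2 / 4) with ((w / 2) ^ 2) by field. apply pow_incr. lra.
Qed.

Lemma asym r k0 : 0 < r -> 0 < k0 ->
  exists e1, 0 < e1 < 1 /\ forall e, 0 < e < e1 -> Tq e (e / rho e k0 / 2) <= Rpower e r.
Proof.
  intros Hr Hk. exists (exp (- (8 * r / k0 ^ 2))). split.
  { split. apply exp_pos. rewrite <- exp_0. apply exp_increasing.
    assert (0 < 8 * r / k0 ^ 2) by (apply Rdiv_lt_0_compat; [lra | apply pow_lt; lra]). lra. }
  intros e He. unfold Tq, rho, Rpower.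
  set (z := - ln e).
  assert (Hz : 8 * r / k0 ^ 2 < z).
  { unfold z. assert (ln e < ln (exp (- (8 * r / k0 ^ 2)))) by (apply ln_increasing; lra).
    rewrite ln_exp in H. lra. }
  assert (Hz0 : 0 < z). { assert (0 < 8 * r / k0 ^ 2) by (apply Rdiv_lt_0_compat; [lra | apply pow_lt; lra]). lra. }
  replace (e / exp (k0 * ln e) / 2 / e) with (/ 2 * exp (k0 * z)).
  2:{ unfold z. replace (k0 * - ln e) with (- (k0 * ln e)) by ring. rewrite exp_Ropp. field.
      split. apply Rgt_not_eq, exp_pos. lra. }
  apply exp_mono. replace (r * ln e) with (- (r * z)) by (unfold z; ring).
  apply Ropp_le_contravar.
  pose proof (exp_sq (k0 * z) ltac:(nra)).
  assert (1 <= sqrt 2). { rewrite <- sqrt_1. apply sqrt_le_1_alt. lra. }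
  assert (r <= k0 ^ 2 * z / 8).
  { apply Rmult_le_reg_r with (8 / k0 ^ 2). apply Rdiv_lt_0_compat. lra. apply pow_lt; lra.
    replace (k0 ^ 2 * z / 8 * (8 / k0 ^ 2)) with z by (field; lra).
    replace (r * (8 / k0 ^ 2)) with (8 * r / k0 ^ 2) by (field; lra). lra. }
  assert (r * z <= (k0 * z) ^ 2 / 8) by (replace ((k0 * z) ^ 2 / 8) with (k0 ^ 2 * z / 8 * z) by field; nra).
  assert (0 <= exp (k0 * z)) by (left; apply exp_pos).
  nra.
Qed.

Lemma isd_mult (f g : R -> R) df dg x : is_derive f x df -> is_derive g x dg ->
  is_derive (fun y => f y * g y) x (df * g x + f x * dg).
Proof. intros. exact (@is_derive_mult R_AbsRing f g x df dg H H0 Rmult_comm). Qed.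

Lemma ct_plus (f g : R -> R) x : continuous f x -> continuous g x -> continuous (fun y => f y + g y) x.
Proof. intros. exact (@continuous_plus R_UniformSpace R_AbsRing R_NormedModule f g x H H0). Qed.
Lemma ct_mult (f g : R -> R) x : continuous f x -> continuous g x -> continuous (fun y => f y * g y) x.
Proof. intros. exact (@continuous_mult R_UniformSpace R_AbsRing f g x H H0). Qed.
Lemma ct_opp (f : R -> R) x : continuous f x -> continuous (fun y => - f y) x.
Proof. intros. exact (@continuous_opp R_UniformSpace R_AbsRing R_NormedModule f x H). Qed.
Lemma ct_minus (f g : R -> R) x : continuous f x -> continuous g x -> continuous (fun y => f y - g y) x.
Proof. intros. apply ct_plus; auto. apply ct_opp; auto. Qed.
Lemma ct_const (c : R) x : continuous (fun _ : R => c) x.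
Proof. exact (@continuous_const R_UniformSpace R_UniformSpace c x). Qed.
Lemma ct_der (f : R -> R) x : ex_derive f x -> continuous f x.
Proof. apply (@ex_derive_continuous R_AbsRing R_NormedModule). Qed.
Lemma ct_pow (f : R -> R) n x : continuous f x -> continuous (fun y => f y ^ n) x.
Proof.
  intros Hf. induction n. simpl. apply ct_const.
  simpl. apply ct_mult; auto.
Qed.

Lemma RInt_add (f g : R -> R) a b : ex_RInt f a b -> ex_RInt g a b ->
  RInt (fun x => f x + g x) a b = RInt f a b + RInt g a b.
Proof. intros. exact (RInt_plus f g a b H H0). Qed.
Lemma RInt_cmul (f : R -> R) c a b : ex_RInt f a b -> RInt (fun x => c * f x) a b = c * RInt f a b.
Proof. intros. exact (RInt_scal f a b c H). Qed.
Lemma RInt_cst (c : R) : RInt (fun _ => c) 0 1 = c.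
Proof. rewrite RInt_const. unfold scal; simpl. unfold mult; simpl. ring. Qed.

Lemma ex_RInt_ct (f : R -> R) : (forall x, 0 <= x <= 1 -> continuous f x) -> ex_RInt f 0 1.
Proof.
  intros H. apply (@ex_RInt_continuous R_CompleteNormedModule). intros z Hz. apply H.
  rewrite Rmin_left, Rmax_right in Hz by lra. auto.
Qed.

Lemma ibp (p p1 p2 w w1 w2 : R -> R) :
  (forall x, 0 <= x <= 1 -> is_derive p x (p1 x)) ->
  (forall x, 0 <= x <= 1 -> is_derive p1 x (p2 x)) ->
  (forall x, 0 <= x <= 1 -> is_derive w x (w1 x)) ->
  (forall x, 0 <= x <= 1 -> is_derive w1 x (w2 x)) ->
  (forall x, 0 <= x <= 1 -> continuous (fun y => p y * w2 y - p2 y * w y) x) ->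
  p1 0 = 0 -> p1 1 = 0 -> w1 0 = 0 -> w1 1 = 0 ->
  RInt (fun x => p x * w2 x - p2 x * w x) 0 1 = 0.
Proof.
  intros Hp Hp1 Hw Hw1 Hc H0 H1 H2 H3.
  pose (F := fun x => p x * w1 x - p1 x * w x).
  assert (HI : is_RInt (fun x => p x * w2 x - p2 x * w x) 0 1 (minus (F 1) (F 0))).
  { apply (is_RInt_derive F).
    - intros x Hx. rewrite Rmin_left, Rmax_right in Hx by lra.
      unfold F. eapply is_derive_ext. intros t; reflexivity.
      replace (p x * w2 x - p2 x * w x) with ((p1 x * w1 x + p x * w2 x) - (p2 x * w x + p1 x * w1 x)) by ring.
      apply isd_minus; apply isd_mult; auto.
    - intros x Hx. rewrite Rmin_left, Rmax_right in Hx by lra. apply Hc; auto. }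
  rewrite (is_RInt_unique _ _ _ _ HI). unfold F, minus, plus, opp; simpl.
  rewrite H0, H1, H2, H3. ring.
Qed.

Lemma abs_le_sq (v : R) : Rabs v <= 1 + v ^ 2.
Proof. pose proof (Rabs_pos v). rewrite <- pow2_abs. nra. Qed.

Lemma cube_amgm (v l : R) : 0 < l -> Rabs v ^ 3 <= v ^ 2 / l + l * v ^ 4.
Proof.
  intros Hl. replace (v ^ 4) with ((v ^ 2) ^ 2) by ring. rewrite <- (pow2_abs v).
  set (a := Rabs v). assert (0 <= a) by apply Rabs_pos.
  apply Rmult_le_reg_r with l. auto.
  replace ((a ^ 2 / l + l * (a ^ 2) ^ 2) * l) with (a ^ 2 + l ^ 2 * (a ^ 2) ^ 2) by (field; lra).
  assert (0 <= (l * a ^ 2 - a) ^ 2) by apply pow2_ge_0.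
  assert (0 <= a ^ 3 * l) by (apply Rmult_le_pos; [apply pow_le|]; lra).
  assert ((l * a ^ 2 - a) ^ 2 = l ^ 2 * (a ^ 2) ^ 2 - 2 * (a ^ 3 * l) + a ^ 2) by ring.
  lra.
Qed.

Lemma final_arith e m kap KD Kg Ku tau I2 I4 :
  0 < e < 1 -> 0 < m -> 0 < kap -> 0 <= KD -> 0 <= Kg -> 0 <= Ku ->
  0 <= tau <= Rpower e (2 + 2 * m - 2 * kap) ->
  I2 < Rpower e (3 + 2 * m) -> I4 < Rpower e (3 + 2 * m - 4 * kap) ->
  (4 * KD + 4 * Kg) * tau + (4 * Kg * tau + 24 * Ku / e + 8 / (e * Rpower e (2 * kap))) * I2
    + (8 * Rpower e (2 * kap) / e) * I4
  <= (4 * KD + 8 * Kg + 24 * Ku + 16) * Rpower e (2 + 2 * m - 2 * kap).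
Proof.
  intros He Hm Hk HKD HKg HKu Ht HI2 HI4.
  set (E := Rpower e (2 + 2 * m - 2 * kap)) in *.
  set (R3 := Rpower e (3 + 2 * m)) in *. set (R4 := Rpower e (3 + 2 * m - 4 * kap)) in *.
  set (l := Rpower e (2 * kap)) in *.
  assert (Hl : 0 < l) by apply exp_pos. assert (HE : 0 < E) by apply exp_pos.
  assert (He1 : Rpower e 1 = e) by (apply Rpower_1; lra).
  assert (HR3 : R3 <= 1). { rewrite <- (Rpower_O e) by lra. apply Rp_mono; lra. }
  assert (Rp1 : forall a, Rpower e (a + 1) = Rpower e a * e).
  { intros a. rewrite Rpower_plus, He1. auto. }
  assert (HR3e : R3 / e <= E).
  { unfold R3. replace (3 + 2 * m) with ((2 + 2 * m) + 1) by ring. rewrite Rp1.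
    replace (Rpower e (2 + 2 * m) * e / e) with (Rpower e (2 + 2 * m)) by (field; lra).
    apply Rp_mono; lra. }
  assert (HR3el : R3 / (e * l) = E).
  { unfold R3, l, E. replace (3 + 2 * m) with ((2 + 2 * m - 2 * kap) + 2 * kap + 1) by ring.
    rewrite Rp1, Rpower_plus. field. split; try lra; apply Rgt_not_eq, exp_pos. }
  assert (HR4 : l * R4 / e = E).
  { unfold R4, l, E. rewrite <- Rpower_plus.
    replace (2 * kap + (3 + 2 * m - 4 * kap)) with ((2 + 2 * m - 2 * kap) + 1) by ring.
    rewrite Rp1. field. lra. }
  assert (HR3p : 0 <= R3) by (left; apply exp_pos).
  clearbody E R3 R4 l.
  assert (Hb : 0 <= 4 * Kg * tau + 24 * Ku / e + 8 / (e * l)).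
  { assert (0 <= 24 * Ku / e) by (apply Rdiv_le_0_compat; lra).
    assert (0 <= 8 / (e * l)) by (apply Rdiv_le_0_compat; nra). nra. }
  assert (S2 : (4 * Kg * tau + 24 * Ku / e + 8 / (e * l)) * I2 <= (4 * Kg * tau + 24 * Ku / e + 8 / (e * l)) * R3)
    by (apply Rmult_le_compat_l; [exact Hb | left; exact HI2]).
  assert (S4 : (8 * l / e) * I4 <= (8 * l / e) * R4).
  { apply Rmult_le_compat_l. apply Rdiv_le_0_compat; lra. left; exact HI4. }
  replace ((4 * Kg * tau + 24 * Ku / e + 8 / (e * l)) * R3) with (4 * Kg * tau * R3 + 24 * Ku * (R3 / e) + 8 * (R3 / (e * l))) in S2
    by (field; lra).
  replace (8 * l / e * R4) with (8 * (l * R4 / e)) in S4 by (field; lra).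
  rewrite HR3el in S2. rewrite HR4 in S4.
  assert (4 * Kg * tau * R3 <= 4 * Kg * E).
  { assert (tau * R3 <= E) by nra. nra. }
  assert (24 * Ku * (R3 / e) <= 24 * Ku * E) by (apply Rmult_le_compat_l; lra).
  assert ((4 * KD + 4 * Kg) * tau <= (4 * KD + 4 * Kg) * E) by (apply Rmult_le_compat_l; lra).
  lra.
Qed.

Lemma pw_alg W Lu g U V e l KD Kg Ku tau : 0 < e -> 0 < l -> 0 <= tau ->
  Rabs (W * Lu) <= 4 * KD * tau -> Rabs g <= 4 * Kg * tau -> Rabs W <= 8 / e -> Rabs U <= Ku ->
  W * Lu + g * V - W * (3 * U * V ^ 2 + V ^ 3) <=
  (4 * KD + 4 * Kg) * tau + (4 * Kg * tau + 24 * Ku / e + 8 / (e * l)) * V ^ 2 + (8 * l / e) * V ^ 4.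
Proof.
  intros He Hl Ht H1 H2 H3 H4.
  assert (t1 : W * Lu <= 4 * KD * tau) by (pose proof (Rle_abs (W * Lu)); lra).
  assert (t2 : g * V <= 4 * Kg * tau * (1 + V ^ 2)).
  { pose proof (Rle_abs (g * V)). rewrite Rabs_mult in H. pose proof (abs_le_sq V).
    pose proof (Rabs_pos g). pose proof (Rabs_pos V). pose proof (pow2_ge_0 V).
    apply Rle_trans with (Rabs g * Rabs V). lra. apply Rmult_le_compat; lra. }
  assert (t3 : - (W * (3 * U * V ^ 2 + V ^ 3)) <= 8 / e * (3 * Ku * V ^ 2 + (V ^ 2 / l + l * V ^ 4))).
  { pose proof (Rle_abs (- (W * (3 * U * V ^ 2 + V ^ 3)))). rewrite Rabs_Ropp, Rabs_mult in H.
    assert (Rabs (3 * U * V ^ 2 + V ^ 3) <= 3 * Ku * V ^ 2 + (V ^ 2 / l + l * V ^ 4)).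
    { eapply Rle_trans. apply Rabs_triang. rewrite !Rabs_mult, (Rabs_pos_eq 3) by lra.
      rewrite <- (RPow_abs V 3). rewrite (Rabs_pos_eq (V ^ 2)) by apply pow2_ge_0.
      pose proof (cube_amgm V l Hl). pose proof (pow2_ge_0 V).
      assert (3 * Rabs U * V ^ 2 <= 3 * Ku * V ^ 2) by nra. lra. }
    pose proof (Rabs_pos W). pose proof (Rabs_pos (3 * U * V ^ 2 + V ^ 3)).
    apply Rle_trans with (Rabs W * Rabs (3 * U * V ^ 2 + V ^ 3)). lra. apply Rmult_le_compat; lra. }
  replace ((4 * KD + 4 * Kg) * tau + (4 * Kg * tau + 24 * Ku / e + 8 / (e * l)) * V ^ 2 + 8 * l / e * V ^ 4)
    with (4 * KD * tau + 4 * Kg * tau * (1 + V ^ 2) + 8 / e * (3 * Ku * V ^ 2 + (V ^ 2 / l + l * V ^ 4))) by (field; lra).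
  lra.
Qed.

Lemma exd_dxxPsi e s t x : e <> 0 -> ex_derive (dxxPsi e s t) x.
Proof. intros. unfold dxxPsi, lay2, layer'. auto_derive. apply ex_derive_U2. Qed.
Lemma exd_dtxxPsi e s t x : e <> 0 -> ex_derive (dtxxPsi e s t) x.
Proof. intros. unfold dtxxPsi, lay2, lay3. auto_derive. apply ex_derive_U3. Qed.
Lemma exd_dtPsi e s t x : e <> 0 -> ex_derive (dtPsi e s t) x.
Proof. intros. eexists. apply Dx_dtPsi; auto. Qed.

Lemma cont_ddu e N h x : e <> 0 -> continuous (ddu e N h) x.
Proof.
  intros He. apply ct_der. unfold ddu. 
  exists (sum_n (fun k => Derive (dxxPsi e ((-1) ^ k) (h (S k))) x) N).
  apply (isd_sum (fun k x => dxxPsi e ((-1) ^ k) (h (S k)) x)).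
  intros k _. apply Derive_correct. apply exd_dxxPsi; auto.
Qed.

Lemma sqrt_lt_sq x r : 0 < r -> sqrt x < r -> x < r * r.
Proof.
  intros Hr Hs. destruct (Rle_dec 0 x).
  - pose proof (sqrt_sqrt x r0). pose proof (sqrt_pos x). nra.
  - nra.
Qed.

Lemma K_pos N : 1 <= Ku N /\ 0 <= Kf N /\ 0 <= KL N /\ 0 <= Kg N /\ 0 <= KD N.
Proof.
  pose proof (pos_INR (S N)). assert (1 <= Ku N) by (unfold Ku; lra).
  assert (0 <= Kf N) by (unfold Kf; nra).
  assert (0 <= KL N) by (unfold KL; nra).
  assert (0 <= Kg N) by (unfold Kg; nra).
  assert (0 <= KD N) by (unfold KD; nra).
  auto.
Qed.

Theorem lemma5p12 :
  forall N : nat, (1 <= N)%nat ->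
  exists kappa0_bar : R, 0 < kappa0_bar /\
  forall kappa0 : R, 0 < kappa0 < kappa0_bar ->
  forall mu : R, -1 < mu < 1 ->
  forall m : R, 0 < m ->
  exists kappa_bar : R, 0 < kappa_bar /\
  forall kappa : R, 0 < kappa < kappa_bar ->
  exists C eps0 : R, 0 < C /\ 0 < eps0 /\
  forall eps : R, 0 < eps < eps0 ->
  forall (xi : nat -> R) (H : (nat -> R) -> R),
    InOmega eps kappa0 N (hcat N xi (H xi)) ->
    mass_map eps N mu H xi ->
  forall v : R -> R,
    regular_neumann v ->
    (forall i : nat, (1 <= i <= N)%nat -> ip v (uxi_i eps N H xi i) = 0) ->
    L2norm v < Rpower eps (3 / 2 + m) ->
    L4norm v < Rpower eps (3 / 4 + m / 2 - kappa) ->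
  forall i : nat, (1 <= i <= N)%nat ->
    ip (uxi_i eps N H xi i) (Lop eps (fun x => uxi eps N H xi x + v x))
      <= C * Rpower eps (2 + 2 * m - 2 * kappa).
Proof.
  intros N HN. exists 1. split; [lra|]. intros k0 Hk0 mu Hmu m Hm.
  exists 1. split; [lra|]. intros kap Hkap.
  destruct (asym (4 + 2 * m) k0 ltac:(lra) ltac:(lra)) as [e1 [He1 Hasym]].
  destruct (K_pos N) as [HKu [HKf [HKL [HKg HKD]]]].
  exists (4 * KD N + 8 * Kg N + 24 * Ku N + 16), (Rmin e1 (1 / 4)).
  split. lra. split. apply Rmin_pos; lra.
  intros e He xi H Hom Hmm v Hv Horth HL2 HL4 i Hi.
  assert (He4 : e < 1 / 4) by (eapply Rlt_le_trans; [apply He | apply Rmin_r]).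
  assert (Hee1 : e < e1) by (eapply Rlt_le_trans; [apply He | apply Rmin_l]).
  assert (He0 : 0 < e < 1) by lra.
  assert (Hne : e <> 0) by lra.
  set (h := hcat N xi (H xi)) in *.
  set (d := e / rho e k0 / 2).
  assert (HT : Tq e d <= Rpower e (4 + 2 * m)) by (apply Hasym; lra).
  assert (Hd : 0 < d).
  { unfold d, rho, Rpower. apply Rdiv_lt_0_compat; [|lra]. apply Rdiv_lt_0_compat. lra. apply exp_pos. }
  destruct (Cfg_of_Omega e k0 N h (proj1 He) Hom) as [Hh Hord]. fold d in Hh, Hord.
  assert (HR4 : Rpower e 4 = e ^ 4).
  { replace 4 with (INR 4) by (simpl; ring). apply Rpower_pow. lra. }
  assert (HT16 : 16 * Tq e d <= e ^ 2).
  { assert (Rpower e (4 + 2 * m) <= Rpower e 4) by (apply Rp_mono; lra).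
    rewrite HR4 in H0. assert (e ^ 4 <= e ^ 2 / 16).
    { replace (e ^ 4) with (e ^ 2 * e ^ 2) by ring. assert (e ^ 2 <= 1 / 16) by (simpl; nra).
      assert (0 <= e ^ 2) by apply pow2_ge_0. nra. }
    lra. }
  assert (HC : Cfg e d N h) by (exact (conj He0 (conj Hd (conj HT16 (conj Hh Hord))))).
  set (tau := Tq e d / e ^ 2).
  assert (Htau : 0 <= tau <= Rpower e (2 + 2 * m - 2 * kap)).
  { split. unfold tau. apply Rdiv_le_0_compat. left; apply Tq_pos. apply pow_lt; lra.
    assert (Rpower e (4 + 2 * m) = Rpower e (2 + 2 * m) * e ^ 2).
    { replace (4 + 2 * m) with ((2 + 2 * m) + 2) by ring. rewrite Rpower_plus.
      replace 2 with (INR 2) at 3 by (simpl; ring). rewrite Rpower_pow by lra. auto. }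
    assert (tau <= Rpower e (2 + 2 * m)).
    { unfold tau. apply Rmult_le_reg_r with (e ^ 2). apply pow_lt; lra.
      unfold Rdiv. rewrite Rmult_assoc, Rinv_l by (apply pow_nonzero; lra). lra. }
    assert (Rpower e (2 + 2 * m) <= Rpower e (2 + 2 * m - 2 * kap)) by (apply Rp_mono; lra).
    lra. }
  set (a := (i - 1)%nat).
  assert (Ha : (a <= N)%nat) by (unfold a; lia).
  assert (Hxa : xi i = h (S a)).
  { unfold h, hcat, a. replace (S (i - 1)) with i by lia. destruct (Nat.eqb_spec i (N + 1)); [lia | auto]. }
  assert (HHb : H xi = h (S N)).
  { unfold h, hcat. replace (S N) with (N + 1)%nat by lia. rewrite Nat.eqb_refl. auto. }
  set (c := Derive (fun s => H (shift xi i s)) 0).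
  assert (Hc : Rabs c <= 3).
  { pose proof (mass_deriv e N mu H xi i Hne Hi Hmm) as Hmd. fold c in Hmd. rewrite Hxa, HHb in Hmd.
    assert (Hsa : Rabs ((-1) ^ (i - 1)) = 1) by apply sigma_abs.
    assert (Hsb : Rabs ((-1) ^ N) = 1) by apply sigma_abs.
    pose proof (dMk_bd e d (h (S a)) ((-1) ^ (i - 1)) (proj1 He0) Hd (Hh a Ha) Hsa (proj2 He0)) as Ba.
    pose proof (dMk_bd e d (h (S N)) ((-1) ^ N) (proj1 He0) Hd (Hh N (le_n N)) Hsb (proj2 He0)) as Bb.
    assert (H16 : 16 * Tq e d / e ^ 2 <= 1).
    { apply Rmult_le_reg_r with (e ^ 2). apply pow_lt; lra.
      unfold Rdiv. rewrite Rmult_assoc, Rinv_l by (apply pow_nonzero; lra). lra. }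
    set (A := dMk e ((-1) ^ (i - 1)) (h (S a))) in *. set (B := dMk e ((-1) ^ N) (h (S N))) in *.
    assert (HA : Rabs A <= 3).
    { pose proof (Rabs_triang (A + 2 * (-1) ^ (i - 1)) (- (2 * (-1) ^ (i - 1)))).
      rewrite Rabs_Ropp, Rabs_mult, Hsa, (Rabs_pos_eq 2) in H0 by lra.
      replace (A + 2 * (-1) ^ (i - 1) + - (2 * (-1) ^ (i - 1))) with A in H0 by ring. lra. }
    assert (HB : 1 <= Rabs B).
    { pose proof (Rabs_triang_inv (2 * (-1) ^ N) (- B)).
      rewrite Rabs_Ropp, Rabs_mult, Hsb, (Rabs_pos_eq 2) in H0 by lra.
      replace (2 * (-1) ^ N - - B) with (B + 2 * (-1) ^ N) in H0 by ring. lra. }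
    assert (Rabs c * Rabs B = Rabs A).
    { rewrite <- Rabs_mult. replace (c * B) with (- A) by lra. apply Rabs_Ropp. }
    pose proof (Rabs_pos c). nra. }
  destruct Hv as [Hv1 [Hv2 [Hv3 [Hv4 Hv5]]]].
  pose (ui := fun x => dtPsi e ((-1) ^ a) (h (S a)) x + c * dtPsi e ((-1) ^ N) (h (S N)) x).
  pose (ui1 := fun x => dtxPsi e ((-1) ^ a) (h (S a)) x + c * dtxPsi e ((-1) ^ N) (h (S N)) x).
  pose (ui2 := fun x => dtxxPsi e ((-1) ^ a) (h (S a)) x + c * dtxxPsi e ((-1) ^ N) (h (S N)) x).
  pose (v2 := fun x => Derive (Derive v) x).
  assert (Hui : forall x, uxi_i e N H xi i x = ui x).
  { intros x. rewrite uxi_i_formula; auto. fold c. rewrite Hxa, HHb. reflexivity.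
    destruct Hmm as [_ Hex]. apply Hex; auto. }
  assert (Hlop : forall x, Lop e (fun x => uxi e N H xi x + v x) x
      = e ^ 2 * (ddu e N h x + v2 x) - Defs.f (uh e N h x + v x)).
  { intros x. unfold Lop. f_equal. f_equal.
    change (Derive_n (fun x => uxi e N H xi x + v x) 2 x) with (Derive (fun y => Derive (fun z => uxi e N H xi z + v z) y) x).
    rewrite (Derive_ext (fun y => Derive (fun z => uxi e N H xi z + v z) y) (fun y => du e N h y + Derive v y)).
    2:{ intros y. rewrite Derive_plus. f_equal. apply is_derive_unique. exact (is_derive_uh e N h y Hne).
        exists (du e N h y). exact (is_derive_uh e N h y Hne). apply Hv1. }
    rewrite Derive_plus. f_equal. apply is_derive_unique, is_derive_du; auto.
    eexists; apply is_derive_du; auto. apply Hv2. }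
  assert (HI2 : RInt (fun x => v x ^ 2) 0 1 < Rpower e (3 + 2 * m)).
  { unfold L2norm in HL2. apply sqrt_lt_sq in HL2. 2: apply exp_pos.
    rewrite <- Rpower_plus in HL2. replace (3 / 2 + m + (3 / 2 + m)) with (3 + 2 * m) in HL2 by field. auto. }
  assert (HI4 : RInt (fun x => v x ^ 4) 0 1 < Rpower e (3 + 2 * m - 4 * kap)).
  { unfold L4norm in HL4. set (R' := Rpower e (3 / 4 + m / 2 - kap)) in HL4.
    assert (0 < R') by apply exp_pos.
    apply sqrt_lt_sq in HL4; auto. apply sqrt_lt_sq in HL4. 2: nra.
    unfold R' in HL4. rewrite <- !Rpower_plus in HL4.
    replace (3 / 4 + m / 2 - kap + (3 / 4 + m / 2 - kap) + (3 / 4 + m / 2 - kap + (3 / 4 + m / 2 - kap)))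
      with (3 + 2 * m - 4 * kap) in HL4 by field. auto. }
  set (l := Rpower e (2 * kap)).
  assert (Hl : 0 < l) by apply exp_pos.
  set (alpha := (4 * KD N + 4 * Kg N) * tau).
  set (beta := 4 * Kg N * tau + 24 * Ku N / e + 8 / (e * l)).
  set (gamma := 8 * l / e).
  pose (Q := fun x => ui x * v2 x - ui2 x * v x).
  pose (F := fun x => ui x * (e ^ 2 * (ddu e N h x + v2 x) - Defs.f (uh e N h x + v x))).
  pose (G := fun x => e ^ 2 * Q x + (alpha + (beta * v x ^ 2 + gamma * v x ^ 4))).
  assert (Dui : forall x, is_derive ui x (ui1 x)).
  { intros x. unfold ui, ui1. apply isd_plus. apply Dx_dtPsi; auto. apply is_derive_scal. apply Dx_dtPsi; auto. }
  assert (Dui1 : forall x, is_derive ui1 x (ui2 x)).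
  { intros x. unfold ui1, ui2. apply isd_plus. apply Dx_dtxPsi; auto. apply is_derive_scal. apply Dx_dtxPsi; auto. }
  assert (cui : forall x, continuous ui x) by (intros; apply ct_der; eexists; apply Dui).
  assert (cui2 : forall x, continuous ui2 x).
  { intros x. apply ct_der. unfold ui2. eexists. apply isd_plus. apply Derive_correct, exd_dtxxPsi; auto.
    apply is_derive_scal. apply Derive_correct, exd_dtxxPsi; auto. }
  assert (cu : forall x, continuous (uh e N h) x) by (intros; apply cont_uh; auto).
  assert (cv : forall x, continuous v x) by (intros; apply ct_der; apply Hv1).
  assert (cv2 : forall x, 0 <= x <= 1 -> continuous v2 x) by (intros; apply Hv3; auto).
  assert (cddu : forall x, continuous (ddu e N h) x) by (intros; apply cont_ddu; auto).
  assert (cQ : forall x, 0 <= x <= 1 -> continuous Q x).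
  { intros x Hx. unfold Q. apply ct_minus; apply ct_mult; auto. }
  assert (cF : forall x, 0 <= x <= 1 -> continuous F x).
  { intros x Hx. unfold F. apply ct_mult; auto. apply ct_minus.
    apply ct_mult. apply ct_const. apply ct_plus; auto.
    unfold Defs.f. apply ct_minus. apply ct_pow. apply ct_plus; auto. apply ct_plus; auto. }
  assert (cv2' : forall x, continuous (fun y => v y ^ 2) x) by (intros; apply ct_pow; auto).
  assert (cv4' : forall x, continuous (fun y => v y ^ 4) x) by (intros; apply ct_pow; auto).
  assert (cR : forall x, 0 <= x <= 1 -> continuous (fun y => alpha + (beta * v y ^ 2 + gamma * v y ^ 4)) x).
  { intros x Hx. apply ct_plus. apply ct_const. apply ct_plus; apply ct_mult; auto; apply ct_const. }
  assert (cG : forall x, 0 <= x <= 1 -> continuous G x).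
  { intros x Hx. unfold G. apply ct_plus. apply ct_mult. apply ct_const. auto. auto. }
  assert (HQ0 : RInt Q 0 1 = 0).
  { unfold Q. apply (ibp ui ui1 ui2 v (Derive v) v2); auto.
    - intros x _. apply Derive_correct, Hv1.
    - intros x _. apply Derive_correct, Hv2.
    - unfold ui1, dtxPsi. ring.
    - unfold ui1, dtxPsi. ring. }
  assert (eQ : ex_RInt Q 0 1) by (apply ex_RInt_ct; auto).
  assert (eQ2 : ex_RInt (fun x => e ^ 2 * Q x) 0 1) by (apply ex_RInt_ct; intros; apply ct_mult; auto; apply ct_const).
  assert (ev2 : ex_RInt (fun x => v x ^ 2) 0 1) by (apply ex_RInt_ct; auto).
  assert (ev4 : ex_RInt (fun x => v x ^ 4) 0 1) by (apply ex_RInt_ct; auto).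
  assert (ebv2 : ex_RInt (fun x => beta * v x ^ 2) 0 1) by (apply ex_RInt_ct; intros; apply ct_mult; auto; apply ct_const).
  assert (egv4 : ex_RInt (fun x => gamma * v x ^ 4) 0 1) by (apply ex_RInt_ct; intros; apply ct_mult; auto; apply ct_const).
  assert (esum : ex_RInt (fun x => beta * v x ^ 2 + gamma * v x ^ 4) 0 1).
  { apply ex_RInt_ct; intros; apply ct_plus; apply ct_mult; auto; apply ct_const. }
  assert (ecst : ex_RInt (fun _ : R => alpha) 0 1) by (apply ex_RInt_ct; intros; apply ct_const).
  assert (eR : ex_RInt (fun x => alpha + (beta * v x ^ 2 + gamma * v x ^ 4)) 0 1) by (apply ex_RInt_ct; auto).
  assert (HRG : RInt G 0 1 = alpha + (beta * RInt (fun x => v x ^ 2) 0 1 + gamma * RInt (fun x => v x ^ 4) 0 1)).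
  { unfold G. rewrite (RInt_add (fun x => e ^ 2 * Q x) (fun x => alpha + (beta * v x ^ 2 + gamma * v x ^ 4))) by auto.
    rewrite (RInt_cmul Q) by auto. rewrite HQ0.
    rewrite (RInt_add (fun _ => alpha) (fun x => beta * v x ^ 2 + gamma * v x ^ 4)) by auto.
    rewrite RInt_cst.
    rewrite (RInt_add (fun x => beta * v x ^ 2) (fun x => gamma * v x ^ 4)) by auto.
    rewrite (RInt_cmul (fun x => v x ^ 2)) by auto. rewrite (RInt_cmul (fun x => v x ^ 4)) by auto. rewrite Rmult_0_r, Rplus_0_l. reflexivity. }
  assert (Hpt : forall x, 0 < x < 1 -> F x <= G x).
  { intros x Hx. assert (Hx' : 0 <= x <= 1) by lra.
    set (U := uh e N h x). set (V := v x).
    set (Lu := e ^ 2 * ddu e N h x - Defs.f U).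
    set (gg := e ^ 2 * ui2 x - fp U * ui x).
    assert (EF : F x = e ^ 2 * Q x + (ui x * Lu + gg * V - ui x * (3 * U * V ^ 2 + V ^ 3))).
    { unfold F, Q, gg, Lu, Defs.f, fp, U, V. ring. }
    rewrite EF. unfold G. fold V. apply Rplus_le_compat_l.
    pose proof (dtLu_bd e d N h HC a x Ha Hx') as La. pose proof (dtLu_bd e d N h HC N x (le_n N) Hx') as Lb.
    pose proof (gj_bd e d N h HC a x Ha Hx') as Ga. pose proof (gj_bd e d N h HC N x (le_n N) Hx') as Gb.
    pose proof (dtj_abs2 e d N h HC a x Ha Hx') as Da. pose proof (dtj_abs2 e d N h HC N x (le_n N) Hx') as Db.
    cbv beta in La, Lb, Ga, Gb, Da, Db. fold U Lu tau in La, Lb, Ga, Gb.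
    pose proof (Rabs_pos c) as Hc0.
    unfold alpha, beta, gamma. rewrite <- Rplus_assoc.
    apply (pw_alg (ui x) Lu gg U V e l (KD N) (Kg N) (Ku N) tau); try lra.
    - unfold ui. rewrite Rmult_plus_distr_r, Rmult_assoc.
      eapply Rle_trans. apply Rabs_triang. rewrite (Rabs_mult c).
      pose proof (Rabs_pos (dtPsi e ((-1) ^ N) (h (S N)) x * Lu)).
      assert (Rabs c * Rabs (dtPsi e ((-1) ^ N) (h (S N)) x * Lu) <= 3 * (KD N * tau)) by nra. lra.
    - unfold gg, ui, ui2.
      replace (e ^ 2 * (dtxxPsi e ((-1) ^ a) (h (S a)) x + c * dtxxPsi e ((-1) ^ N) (h (S N)) x) -
        fp U * (dtPsi e ((-1) ^ a) (h (S a)) x + c * dtPsi e ((-1) ^ N) (h (S N)) x)) with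
        ((e ^ 2 * dtxxPsi e ((-1) ^ a) (h (S a)) x - fp U * dtPsi e ((-1) ^ a) (h (S a)) x) +
         c * (e ^ 2 * dtxxPsi e ((-1) ^ N) (h (S N)) x - fp U * dtPsi e ((-1) ^ N) (h (S N)) x)) by ring.
      eapply Rle_trans. apply Rabs_triang. rewrite (Rabs_mult c).
      pose proof (Rabs_pos (e ^ 2 * dtxxPsi e ((-1) ^ N) (h (S N)) x - fp U * dtPsi e ((-1) ^ N) (h (S N)) x)).
      assert (Rabs c * Rabs (e ^ 2 * dtxxPsi e ((-1) ^ N) (h (S N)) x - fp U * dtPsi e ((-1) ^ N) (h (S N)) x) <= 3 * (Kg N * tau)) by nra.
      lra.
    - unfold ui. eapply Rle_trans. apply Rabs_triang. rewrite Rabs_mult.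
      pose proof (Rabs_pos (dtPsi e ((-1) ^ N) (h (S N)) x)).
      assert (Rabs c * Rabs (dtPsi e ((-1) ^ N) (h (S N)) x) <= 3 * (2 / e)) by nra.
      unfold Rdiv in *. lra.
    - apply (u_bd e d N h HC x Hx'). }
  unfold ip. rewrite (RInt_ext _ F).
  2:{ intros x _. rewrite Hui, Hlop. reflexivity. }
  apply Rle_trans with (RInt G 0 1).
  { apply RInt_le. lra. apply ex_RInt_ct; auto. apply ex_RInt_ct; auto. auto. }
  rewrite HRG. unfold alpha, beta, gamma, l.
  rewrite <- Rplus_assoc. apply final_arith; auto; lra.
Qed.
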